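(* The correctly rounded versions $\mathrm{rnd}(\rho)$ of each of the activation functions $\rho=\mathrm{ReLU}$, $\mathrm{LeakyReLU}$, $\mathrm{GELU}$, $\mathrm{ELU}$, $\mathrm{Mish}$, $\mathrm{softplus}$, $\mathrm{sigmoid}$, and $\tanh$ satisfy Condition 1.
   Context: Floating point. Fix integers $E\ge 5$ and $M$ with $2^{E-1}\ge M\ge 3$; let $\mathfrak e_{\min}=-2^{E-1}+2$, $\mathfrak e_{\max}=2^{E-1}-1$. $\mathbb F=\{(-1)^b(s_0.s_1\dots s_M)_2\cdot 2^e: b,s_i\in\{0,1\},e\in\{\mathfrak e_{\min},\dots,\mathfrak e_{\max}\}\}$, $\overline{\mathbb F}=\mathbb F\cup\{-\infty,+\infty,\mathrm{NaN}\}$, $\Omega=2^{\mathfrak e_{\max}}(2-2^{-M})$, $\varepsilon=2^{-M-1}$. For $x\in\mathbb F$, $x^+=\min\{y\in\overline{\mathbb F}\setminus\{\mathrm{NaN}\}:y>x\}$. The rounding $\mathrm{rnd}:\mathbb R\cup\{\pm\infty\}\to\overline{\mathbb F}$: $\mathrm{rnd}(x)=-\infty$ if $x\le-\Omega-c$, $+\infty$ if $x\ge\Omega+c$ ($c=2^{\mathfrak e_{\max}}\varepsilon$), otherwise the nearest element of $\mathbb F$ with ties toward the float whose last significand bit is $0$. For $\rho:\mathbb R\to\mathbb R$, $\mathrm{rnd}(\rho)(x)=\mathrm{rnd}(\rho(x))$ for $x\in\mathbb F$, $\mathrm{rnd}(\lim_{t\to x}\rho(t))$ for $x=\pm\infty$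 when the limit exists in $\mathbb R\cup\{\pm\infty\}$, and $\mathrm{NaN}$ otherwise. The activations are the standard ones: $\mathrm{ReLU}(x)=\max\{x,0\}$; $\mathrm{LeakyReLU}(x)=\max\{x,ax\}$ with a fixed slope $a\in(0,1)$; $\mathrm{GELU}(x)=x\Phi(x)$ ($\Phi$ the standard normal CDF); $\mathrm{ELU}(x)=x$ for $x>0$ and $e^x-1$ otherwise; $\mathrm{softplus}(x)=\log(1+e^x)$; $\mathrm{Mish}(x)=x\tanh(\mathrm{softplus}(x))$; $\mathrm{sigmoid}(x)=1/(1+e^{-x})$; $\tanh$. Condition 1 on $\sigma:\overline{\mathbb F}\to\overline{\mathbb F}$: (C1) there exist $c_1,c_2\in\mathbb F$ with $\sigma(c_1)=0$, $|\sigma(c_2)|\in[\frac\varepsilon2+2\varepsilon^2,\frac54-2\varepsilon]$, $\max\{|c_1|,|c_2|\}\ge2^{\mathfrak e_{\min}+1}$, and $\sigma(x)$ between $\sigma(c_1)$ and $\sigma(c_2)$ for all $x$ between $c_1,c_2$; (C2) there is $\eta\in\mathbb F$ with $|\eta|\in[2^{\mathfrak e_{\min}+5},4-8\varepsilon]$ and $|\sigma(\eta)|,|\sigma(\eta^+)|\in[2^{\mathfrak e_{\min}+5},2^{\mathfrak e_{\max}-6}|\eta|]$ such that for all $x,y\in\mathbb F$ with $x\le\eta<\eta^+\le y$, either $\sigma(x)\le\sigma(\eta)<\sigma(\eta^+)\le\sigma(y)$ or $\sigma(x)\ge\sigma(\eta)>\sigma(\eta^+)\ge\sigma(y)$; (C3)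 there is $\lambda\in[0,2^{\mathfrak e_{\max}-7}\min\{|\sigma(\eta)|,2^{M+3}\}]$ with $|\sigma(x)-\sigma(\eta)|\le\lambda|x-\eta|$ and $|\sigma(y)-\sigma(\eta^+)|\le\lambda|y-\eta^+|$ for all $x,y\in\mathbb F$ with $x\le\eta<\eta^+\le y$. *)

(* Defs.v *)
From Stdlib Require Import Reals Lra ZArith ClassicalEpsilon.
From Coquelicot Require Import Coquelicot.
Open Scope R_scope.

Definition emin (E : nat) : Z := (- 2 ^ (Z.of_nat E - 1) + 2)%Z.
Definition emax (E : nat) : Z := (2 ^ (Z.of_nat E - 1) - 1)%Z.

(* (-1)^b (s0.s1...sM)_2 2^e  =  (-1)^b * m * 2^(e-M)  with m = (s0 s1 ... sM)_2 *)
Definition inF (E M : nat) (x : R) : Prop :=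
  exists (b : bool) (m e : Z),
    (0 <= m < 2 ^ (Z.of_nat M + 1))%Z /\ (emin E <= e <= emax E)%Z /\
    x = (if b then -1 else 1) * IZR m * powerRZ 2 (e - Z.of_nat M).

Definition Omega (E M : nat) : R :=
  powerRZ 2 (emax E) * (2 - powerRZ 2 (- Z.of_nat M)).
Definition eps (M : nat) : R := powerRZ 2 (- Z.of_nat M - 1).

(* Extended floats:  F-bar = F u {-oo,+oo,NaN}.  FNum r is meant for r in F. *)
Inductive Fbar : Type := FNum (r : R) | FPinf | FNinf | FNaN.

Definition inFbar (E M : nat) (z : Fbar) : Prop :=
  match z with FNum r => inF E M r | FPinf | FNinf => True | FNaN => False end.

Definition fle (a b : Fbar) : Prop :=
  match a, b with
  | FNaN, _ | _, FNaN => False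
  | FNinf, _ => True
  | _, FPinf => True
  | FNum x, FNum y => x <= y
  | _, _ => False
  end.
Definition flt (a b : Fbar) : Prop := fle a b /\ a <> b.

Definition fsucc_spec (E M : nat) (x : R) (z : Fbar) : Prop :=
  inFbar E M z /\ flt (FNum x) z /\
  forall w, inFbar E M w -> flt (FNum x) w -> fle z w.
Definition fsucc (E M : nat) (x : R) : Fbar :=
  epsilon (inhabits FNaN) (fsucc_spec E M x).

(* canonical representation (normal: s0 = 1, or subnormal: e = emin);
   "last significand bit is 0" refers to it *)
Definition last_bit_zero (E M : nat) (x : R) : Prop :=
  exists (b : bool) (m e : Z),
    (((2 ^ Z.of_nat M <= m < 2 ^ (Z.of_nat M + 1))%Z /\ (emin E <= e <= emax E)%Z)
     \/ ((0 <= m < 2 ^ Z.of_nat M)%Z /\ e = emin E)) /\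
    x = (if b then -1 else 1) * IZR m * powerRZ 2 (e - Z.of_nat M) /\
    Z.even m = true.

Definition round_spec (E M : nat) (x y : R) : Prop :=
  inF E M y /\ (forall z, inF E M z -> Rabs (x - y) <= Rabs (x - z)) /\
  (forall z, inF E M z -> Rabs (x - z) = Rabs (x - y) -> z <> y -> last_bit_zero E M y).

Definition rnd (E M : nat) (x : Rbar) : Fbar :=
  let c := powerRZ 2 (emax E) * eps M in
  match x with
  | p_infty => FPinf
  | m_infty => FNinf
  | Finite r =>
      if Rle_dec r (- Omega E M - c) then FNinf
      else if Rle_dec (Omega E M + c) r then FPinf
      else FNum (epsilon (inhabits 0) (round_spec E M r))
  end.

Definition rndf (E M : nat) (rho : R -> R) (x : Fbar) : Fbar :=
  match x with
  | FNum r => rnd E M (Finite (rho r))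
  | FPinf => if excluded_middle_informative (ex_lim rho p_infty)
             then rnd E M (Lim rho p_infty) else FNaN
  | FNinf => if excluded_middle_informative (ex_lim rho m_infty)
             then rnd E M (Lim rho m_infty) else FNaN
  | FNaN => FNaN
  end.

Definition ReLU (x : R) : R := Rmax x 0.
Definition LeakyReLU (a x : R) : R := Rmax x (a * x).
Definition Phi (x : R) : R :=
  / 2 + RInt (fun t => exp (- t ^ 2 / 2)) 0 x / sqrt (2 * PI).
Definition GELU (x : R) : R := x * Phi x.
Definition ELU (x : R) : R := if Rlt_dec 0 x then x else exp x - 1.
Definition softplus (x : R) : R := ln (1 + exp x).
Definition Mish (x : R) : R := x * tanh (softplus x).
Definition sigmoid (x : R) : R := / (1 + exp (- x)).
Definition tanh_act (x : R) : R := tanh x.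

Definition C1 (E M : nat) (sigma : Fbar -> Fbar) : Prop :=
  exists c1 c2 v, inF E M c1 /\ inF E M c2 /\
    sigma (FNum c1) = FNum 0 /\ sigma (FNum c2) = FNum v /\
    eps M / 2 + 2 * eps M ^ 2 <= Rabs v <= 5 / 4 - 2 * eps M /\
    Rmax (Rabs c1) (Rabs c2) >= powerRZ 2 (emin E + 1) /\
    forall x, inF E M x -> Rmin c1 c2 <= x <= Rmax c1 c2 ->
      exists u, sigma (FNum x) = FNum u /\ Rmin 0 v <= u <= Rmax 0 v.

Definition realF (z : Fbar) : R := match z with FNum r => r | _ => 0 end.

Definition Condition1 (E M : nat) (sigma : Fbar -> Fbar) : Prop :=
  C1 E M sigma /\
  exists eta s0 s1,
    let etap := fsucc E M eta in
    let lo := powerRZ 2 (emin E + 5) in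
    inF E M eta /\ lo <= Rabs eta <= 4 - 8 * eps M /\
    sigma (FNum eta) = FNum s0 /\ sigma etap = FNum s1 /\
    lo <= Rabs s0 <= powerRZ 2 (emax E - 6) * Rabs eta /\
    lo <= Rabs s1 <= powerRZ 2 (emax E - 6) * Rabs eta /\
    (forall x y, inF E M x -> inF E M y -> x <= eta -> fle etap (FNum y) ->
       (fle (sigma (FNum x)) (FNum s0) /\ s0 < s1 /\ fle (FNum s1) (sigma (FNum y))) \/
       (fle (FNum s0) (sigma (FNum x)) /\ s0 > s1 /\ fle (sigma (FNum y)) (FNum s1))) /\
    exists lam,
      0 <= lam <= powerRZ 2 (emax E - 7) * Rmin (Rabs s0) (powerRZ 2 (Z.of_nat M + 3)) /\
      forall x y, inF E M x -> inF E M y -> x <= eta -> fle etap (FNum y) ->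
        (exists u, sigma (FNum x) = FNum u /\ Rabs (u - s0) <= lam * Rabs (x - eta)) /\
        (exists w, sigma (FNum y) = FNum w /\ Rabs (w - s1) <= lam * Rabs (y - realF etap)).

(* Main.v *)
Require Import Defs.
From Stdlib Require Import Reals.
From Coquelicot Require Import Coquelicot.
From Stdlib Require Import Lra Lia ZArith ClassicalEpsilon Classical List.
Open Scope R_scope.

Lemma exp_ge x : 1 + x <= exp x.
Proof. apply exp_ineq1_le. Qed.

Lemma exp_le_inv x : x < 1 -> exp x <= / (1 - x).
Proof.
  intros H. pose proof (exp_ge (- x)). rewrite exp_Ropp in H0.
  pose proof (exp_pos x).
  apply Rmult_le_reg_r with (1 - x); [lra|]. rewrite Rinv_l by lra.
  apply Rmult_le_reg_r with (/ exp x); [apply Rinv_0_lt_compat; lra|].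
  replace (exp x * (1 - x) * / exp x) with (1 - x) by (field; lra). lra.
Qed.

Lemma exp_mono a b : a <= b -> exp a <= exp b.
Proof. intros [H|H]; [left; apply exp_increasing; auto|subst; lra]. Qed.

Lemma exp_nat n x : exp (INR n * x) = exp x ^ n.
Proof.
  induction n as [|n IH]; [simpl; rewrite Rmult_0_l, exp_0; auto|].
  rewrite S_INR, Rmult_plus_distr_r, Rmult_1_l, exp_plus, IH. simpl. ring.
Qed.

Lemma e_lb : 2.63 <= exp 1.
Proof.
  replace 1 with (INR 16 * (1/16)) by (simpl; lra). rewrite exp_nat.
  pose proof (exp_ge (1/16)).
  assert (H1 : 17/16 <= exp (1/16)) by lra.
  assert (H2 : (17/16)^16 <= exp (1/16) ^ 16) by (apply pow_incr; lra).
  assert (H3 : 2.63 <= (17/16)^16) by (simpl; lra). lra.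
Qed.

Lemma e_ub : exp 1 <= 2.75.
Proof.
  replace 1 with (INR 64 * (1/64)) by (simpl; lra). rewrite exp_nat.
  pose proof (exp_le_inv (1/64) ltac:(lra)).
  assert (H1 : exp (1/64) <= 64/63) by (replace (64/63) with (/ (1 - 1/64)) by field; lra).
  assert (H2 : exp (1/64) ^ 64 <= (64/63) ^ 64) by (apply pow_incr; split; [left; apply exp_pos|auto]).
  assert (H3 : (64/63)^64 <= 2.75) by (simpl; lra). lra.
Qed.

Lemma ln_le_x z : 0 < z -> ln z <= z - 1.
Proof. intros H. pose proof (exp_ge (ln z)). rewrite exp_ln in H0 by auto. lra. Qed.

Lemma ln_ge_x z : 0 < z -> 1 - / z <= ln z.
Proof.
  intros H. pose proof (ln_le_x (/ z) ltac:(apply Rinv_0_lt_compat; auto)).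
  rewrite ln_Rinv in H0 by auto. lra.
Qed.

Lemma ln_mono a b : 0 < a -> a <= b -> ln a <= ln b.
Proof. intros H [H1|H1]; [left; apply ln_increasing; auto|subst; lra]. Qed.

Lemma one_m_exp t : 0 <= t -> t / (1 + t) <= 1 - exp (- t).
Proof.
  intros H. pose proof (exp_le_inv (- t) ltac:(lra)).
  replace (1 - - t) with (1 + t) in H0 by ring.
  assert (/ (1 + t) = 1 - t / (1 + t)) by (field; lra). lra.
Qed.

Lemma sgm_pos x : 0 < sigmoid x.
Proof. unfold sigmoid. apply Rinv_0_lt_compat. pose proof (exp_pos (- x)). lra. Qed.

Lemma sgm_lt1 x : sigmoid x < 1.
Proof.
  unfold sigmoid. pose proof (exp_pos (- x)).
  rewrite <- Rinv_1. apply Rinv_lt_contravar; lra.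
Qed.

Lemma sgm_mono a b : a <= b -> sigmoid a <= sigmoid b.
Proof.
  intros H. unfold sigmoid. pose proof (exp_pos (- a)). pose proof (exp_pos (- b)).
  apply Rinv_le_contravar; [lra|]. pose proof (exp_mono (- b) (- a) ltac:(lra)). lra.
Qed.

Lemma sgm_0 : sigmoid 0 = 1 / 2.
Proof. unfold sigmoid. rewrite Ropp_0, exp_0. field. Qed.

Lemma sgm_diff a b : sigmoid b - sigmoid a =
  (exp (- a) - exp (- b)) / ((1 + exp (- a)) * (1 + exp (- b))).
Proof. unfold sigmoid. pose proof (exp_pos (- a)). pose proof (exp_pos (- b)). field. lra. Qed.

Lemma sgm_lip_le a b : a <= b -> sigmoid b - sigmoid a <= b - a.
Proof.
  intros H. rewrite sgm_diff. pose proof (exp_pos (- a)). pose proof (exp_pos (- b)).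
  replace (- b) with (- a + - (b - a)) by ring. rewrite exp_plus.
  pose proof (one_m_exp (b - a) ltac:(lra)). pose proof (exp_pos (- (b - a))).
  set (q := exp (- a)) in *. set (r := exp (- (b - a))) in *.
  assert (1 - r <= b - a).
  { pose proof (exp_ge (- (b - a))). fold r in H4. lra. }
  apply Rmult_le_reg_r with ((1 + q) * (1 + q * r)); [nra|].
  unfold Rdiv. rewrite Rmult_assoc, Rinv_l by nra. rewrite Rmult_1_r.
  assert (q * (1 - r) <= q * (b - a)) by (apply Rmult_le_compat_l; lra).
  assert (0 <= (b - a) * ((1 + q) * (1 + q * r) - q)).
  { apply Rmult_le_pos; [lra|]. assert (0 <= q * r) by (apply Rmult_le_pos; lra). nra. }
  nra.
Qed.

Lemma sgm_lip a b : Rabs (sigmoid a - sigmoid b) <= Rabs (a - b).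
Proof.
  destruct (Rle_dec a b).
  - pose proof (sgm_lip_le a b r). pose proof (sgm_mono a b r).
    rewrite Rabs_left1 by lra. rewrite Rabs_left1 by lra. lra.
  - pose proof (sgm_lip_le b a ltac:(lra)). pose proof (sgm_mono b a ltac:(lra)).
    rewrite Rabs_right by lra. rewrite Rabs_right by lra. lra.
Qed.

Lemma sgm_incr x s : 0 <= s ->
  exp (- x) * (s / (1 + s)) / (1 + exp (- x)) ^ 2 <= sigmoid (x + s) - sigmoid x.
Proof.
  intros Hs. rewrite sgm_diff. pose proof (exp_pos (- x)).
  replace (- (x + s)) with (- x + - s) by ring. rewrite exp_plus.
  pose proof (one_m_exp s Hs). pose proof (exp_pos (- s)).
  set (q := exp (- x)) in *. set (r := exp (- s)) in *.
  assert (r <= 1) by (pose proof (exp_mono (- s) 0 ltac:(lra)); rewrite exp_0 in H2; auto).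
  assert (0 <= s / (1 + s)) by (apply Rmult_le_pos; [lra|left; apply Rinv_0_lt_compat; lra]).
  apply Rle_trans with (q * (1 - r) / ((1 + q) * (1 + q * r))).
  - unfold Rdiv. apply Rmult_le_compat.
    + nra.
    + left; apply Rinv_0_lt_compat; nra.
    + nra.
    + apply Rinv_le_contravar; nra.
  - right. field. nra.
Qed.

Lemma sgm_tiny x : 0 <= x -> sigmoid (- x) <= exp (- x).
Proof.
  intros H. unfold sigmoid. rewrite Ropp_involutive. rewrite exp_Ropp.
  pose proof (exp_pos x). apply Rinv_le_contravar; lra.
Qed.

Lemma sp_pos x : 0 < softplus x.
Proof.
  unfold softplus. pose proof (exp_pos x). rewrite <- ln_1. apply ln_increasing; lra.
Qed.

Lemma sp_mono a b : a <= b -> softplus a <= softplus b.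
Proof.
  intros H. unfold softplus. pose proof (exp_pos a). pose proof (exp_mono a b H).
  apply ln_mono; lra.
Qed.

Lemma sp_lip_le a b : a <= b -> softplus b - softplus a <= b - a.
Proof.
  intros H. unfold softplus. pose proof (exp_pos a). pose proof (exp_pos b).
  assert (Hl : ln (1 + exp b) <= ln ((1 + exp a) * exp (b - a))).
  { apply ln_mono; [lra|].
    replace b with (a + (b - a)) at 1 by ring. rewrite exp_plus.
    pose proof (exp_pos (b - a)). pose proof (exp_mono 0 (b - a) ltac:(lra)). rewrite exp_0 in H3. nra. }
  rewrite ln_mult, ln_exp in Hl by (try apply exp_pos; lra). lra.
Qed.

Lemma sp_lip a b : Rabs (softplus a - softplus b) <= Rabs (a - b).
Proof.
  destruct (Rle_dec a b).
  - pose proof (sp_lip_le a b r). pose proof (sp_mono a b r).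
    rewrite Rabs_left1 by lra. rewrite Rabs_left1 by lra. lra.
  - pose proof (sp_lip_le b a ltac:(lra)). pose proof (sp_mono b a ltac:(lra)).
    rewrite Rabs_right by lra. rewrite Rabs_right by lra. lra.
Qed.

Lemma sp_le_exp x : softplus x <= exp x.
Proof. unfold softplus. pose proof (exp_pos x). pose proof (ln_le_x (1 + exp x) ltac:(lra)). lra. Qed.

Lemma sp_le_x x : softplus x <= x + exp (- x).
Proof.
  unfold softplus. pose proof (exp_pos x). pose proof (exp_pos (- x)).
  replace (1 + exp x) with (exp x * (1 + exp (- x))).
  - rewrite ln_mult, ln_exp by lra. pose proof (ln_le_x (1 + exp (- x)) ltac:(lra)). lra.
  - rewrite exp_Ropp. field. lra.
Qed.

Lemma sp_ge_x x : x <= softplus x.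
Proof.
  unfold softplus. pose proof (exp_pos x). rewrite <- (ln_exp x) at 1. apply ln_mono; lra.
Qed.

Lemma sp_0 : 1/2 <= softplus 0 <= 1.
Proof.
  unfold softplus. rewrite exp_0. replace (1 + 1) with 2 by ring. split.
  - pose proof ln_lt_2. lra.
  - pose proof (ln_le_x 2 ltac:(lra)). replace (1 + 1) with 2 by ring. lra.
Qed.

Lemma sp_1 : softplus 1 <= 2.
Proof.
  unfold softplus. pose proof e_lb. pose proof e_ub.
  rewrite <- (ln_exp 2). apply ln_mono; [lra|].
  replace 2 with (INR 2 * 1) by (simpl; lra). rewrite exp_nat. simpl. nra.
Qed.

Lemma exp3_bounds : 18 <= exp 3 <= 21.
Proof.
  replace 3 with (INR 3 * 1) by (simpl; lra). rewrite exp_nat.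
  pose proof e_lb. pose proof e_ub. simpl. split; nra.
Qed.

Lemma sp_m3 : 1/32 <= softplus (-3) <= 15/256.
Proof.
  pose proof exp3_bounds. unfold softplus. replace (-3) with (Ropp 3) by ring. rewrite exp_Ropp.
  assert (0 < / exp 3) by (apply Rinv_0_lt_compat; lra).
  split.
  - pose proof (ln_ge_x (1 + / exp 3) ltac:(lra)).
    assert (1 - / (1 + / exp 3) = / (exp 3 + 1)) by (field; lra).
    assert (/ (exp 3 + 1) >= 1 / 32).
    { apply Rle_ge. unfold Rdiv. rewrite Rmult_1_l. apply Rinv_le_contravar; lra. }
    lra.
  - pose proof (ln_le_x (1 + / exp 3) ltac:(lra)).
    assert (/ exp 3 <= 15 / 256).
    { apply Rmult_le_reg_r with (exp 3); [lra|]. rewrite Rinv_l by lra. lra. }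
    lra.
Qed.

Lemma sp_incr s : 0 <= s <= 1/4 -> s / 40 <= softplus (-3 + s) - softplus (-3).
Proof.
  intros Hs. pose proof exp3_bounds. unfold softplus. replace (-3) with (Ropp 3) by ring.
  pose proof (exp_pos (Ropp 3)). pose proof (exp_pos (Ropp 3 + s)).
  assert (Hz : ln (1 + exp (Ropp 3 + s)) - ln (1 + exp (Ropp 3)) = ln ((1 + exp (Ropp 3 + s)) * / (1 + exp (Ropp 3)))).
  { rewrite ln_mult, ln_Rinv by (try apply Rinv_0_lt_compat; lra). ring. }
  rewrite Hz.
  pose proof (ln_ge_x ((1 + exp (Ropp 3 + s)) * / (1 + exp (Ropp 3))) ltac:(apply Rmult_lt_0_compat; [lra|apply Rinv_0_lt_compat; lra])).
  assert (HH : 1 - / ((1 + exp (Ropp 3 + s)) * / (1 + exp (Ropp 3))) = (exp (Ropp 3 + s) - exp (Ropp 3)) / (1 + exp (Ropp 3 + s))) by (field; lra).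
  rewrite HH in H2.
  rewrite exp_plus in *. rewrite exp_Ropp in *.
  pose proof (exp_ge s). pose proof (exp_le_inv s ltac:(lra)).
  assert (/ (1 - s) <= 4/3) by (apply Rmult_le_reg_r with (1 - s); [lra|]; rewrite Rinv_l by lra; lra).
  set (q := / exp 3) in *. set (r := exp s) in *.
  assert (q <= / 18) by (unfold q; apply Rinv_le_contravar; lra).
  assert (/ 21 <= q) by (unfold q; apply Rinv_le_contravar; lra).
  assert (s / 40 <= (q * r - q) / (1 + q * r)).
  { apply Rmult_le_reg_r with (40 * (1 + q * r)); [nra|].
    unfold Rdiv. field_simplify; [|nra].
    assert (q * s <= q * (r - 1)) by (apply Rmult_le_compat_l; lra).
    assert (q * r <= q * (4/3)) by (apply Rmult_le_compat_l; lra). nra. }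
  lra.
Qed.

Lemma sgm_m3 : 1/32 <= sigmoid (-3) <= 15/256.
Proof.
  pose proof exp3_bounds. unfold sigmoid. replace (- -3) with 3 by ring. split.
  - unfold Rdiv. rewrite Rmult_1_l. apply Rinv_le_contravar; lra.
  - replace (15/256) with (/ (256/15)) by field. apply Rinv_le_contravar; lra.
Qed.

Lemma sgm_incr_m3 s : 0 <= s <= 1/4 -> s / 40 <= sigmoid (-3 + s) - sigmoid (-3).
Proof.
  intros Hs. pose proof (sgm_incr (-3) s ltac:(lra)). replace (- -3) with 3 in H by ring.
  pose proof exp3_bounds.
  apply Rle_trans with (2 := H).
  set (A := exp 3) in *.
  assert (0 <= s / (1 + s)) by (apply Rmult_le_pos; [lra|left; apply Rinv_0_lt_compat; lra]).
  assert (s * 4 / 5 <= s / (1 + s)).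
  { assert (/ (5/4) <= / (1 + s)) by (apply Rinv_le_contravar; lra).
    unfold Rdiv. replace (/ (5/4)) with (4/5) in H2 by field.
    assert (s * (4/5) <= s * / (1 + s)) by (apply Rmult_le_compat_l; lra). lra. }
  apply Rmult_le_reg_r with ((1 + A) ^ 2); [nra|].
  unfold Rdiv at 2. rewrite Rmult_assoc, Rinv_l by nra. rewrite Rmult_1_r.
  assert (A * (s*4/5) <= A * (s/(1+s))) by (apply Rmult_le_compat_l; lra).
  assert (0 <= s * (32 * A - (1 + A) ^ 2)) by (apply Rmult_le_pos; nra).
  nra.
Qed.

Lemma tanh_sgm x : Rtrigo_def.tanh x = 2 * sigmoid (2 * x) - 1.
Proof.
  unfold Rtrigo_def.tanh, Rtrigo_def.sinh, Rtrigo_def.cosh, sigmoid.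
  pose proof (exp_pos x). pose proof (exp_pos (- x)).
  replace (- (2 * x)) with (- x + - x) by ring. rewrite exp_plus.
  assert (Hx : exp x = / exp (- x)) by (rewrite exp_Ropp, Rinv_inv; auto).
  rewrite Hx. set (u := exp (- x)) in *. field. split; [|lra]. nra.
Qed.

Lemma tanh_bnd x : -1 < Rtrigo_def.tanh x < 1.
Proof. rewrite tanh_sgm. pose proof (sgm_pos (2 * x)). pose proof (sgm_lt1 (2 * x)). lra. Qed.

Lemma tanh_mono a b : a <= b -> Rtrigo_def.tanh a <= Rtrigo_def.tanh b.
Proof. intros H. rewrite !tanh_sgm. pose proof (sgm_mono (2 * a) (2 * b) ltac:(lra)). lra. Qed.

Lemma tanh_lip a b : Rabs (Rtrigo_def.tanh a - Rtrigo_def.tanh b) <= 4 * Rabs (a - b).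
Proof.
  rewrite !tanh_sgm. pose proof (sgm_lip (2 * a) (2 * b)).
  replace (2 * sigmoid (2 * a) - 1 - (2 * sigmoid (2 * b) - 1)) with (2 * (sigmoid (2 * a) - sigmoid (2 * b))) by ring.
  replace (2 * a - 2 * b) with (2 * (a - b)) in H by ring.
  rewrite Rabs_mult in *. rewrite (Rabs_right 2) in * by lra. lra.
Qed.

Lemma tanh_0 : Rtrigo_def.tanh 0 = 0.
Proof. rewrite tanh_sgm, Rmult_0_r, sgm_0. field. Qed.

Lemma tanh_pos x : 0 <= x -> 0 <= Rtrigo_def.tanh x.
Proof. intros H. rewrite <- tanh_0. apply tanh_mono; auto. Qed.

Lemma tanh_1 : 1/2 <= Rtrigo_def.tanh 1.
Proof.
  rewrite tanh_sgm. unfold sigmoid. pose proof e_lb.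
  replace (- (2 * 1)) with (- (INR 2 * 1)) by (simpl; ring). rewrite exp_Ropp, exp_nat.
  simpl. assert (/ (exp 1 * (exp 1 * 1)) <= 1/3).
  { replace (1/3) with (/ 3) by field. apply Rinv_le_contravar; nra. }
  assert (0 < / (exp 1 * (exp 1 * 1))) by (apply Rinv_0_lt_compat; nra).
  set (q := / (exp 1 * (exp 1 * 1))) in *.
  assert (2 * / (1 + q) >= 3/2).
  { apply Rle_ge. apply Rmult_le_reg_r with (1 + q); [lra|]. rewrite Rmult_assoc, Rinv_l by lra. lra. }
  lra.
Qed.

Lemma tanh_half : 1/4 <= Rtrigo_def.tanh (1/2) <= 15/32.
Proof.
  rewrite tanh_sgm. unfold sigmoid. replace (- (2 * (1/2))) with (Ropp 1) by field.
  rewrite exp_Ropp. pose proof e_lb. pose proof e_ub.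
  replace (2 * / (1 + / exp 1) - 1) with (1 - 2 * / (exp 1 + 1)) by (field; lra).
  assert (/ 3.75 <= / (exp 1 + 1)) by (apply Rinv_le_contravar; lra).
  assert (/ (exp 1 + 1) <= / 3.63) by (apply Rinv_le_contravar; lra).
  split; lra.
Qed.

Lemma tanh_incr_half t : 0 <= t <= 1/16 -> 3 * t / 5 <= Rtrigo_def.tanh (1/2 + t) - Rtrigo_def.tanh (1/2).
Proof.
  intros Ht. rewrite !tanh_sgm. replace (2 * (1/2 + t)) with (1 + 2 * t) by field. replace (2 * (1/2)) with 1 by field.
  pose proof (sgm_incr 1 (2 * t) ltac:(lra)).
  rewrite exp_Ropp in H. pose proof e_lb. pose proof e_ub.
  set (q := / exp 1) in *.
  assert (/ 2.75 <= q) by (unfold q; apply Rinv_le_contravar; lra).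
  assert (q <= / 2.63) by (unfold q; apply Rinv_le_contravar; lra).
  assert (2 * t * (8/9) <= 2 * t / (1 + 2 * t)).
  { assert (/ (9/8) <= / (1 + 2 * t)) by (apply Rinv_le_contravar; lra).
    unfold Rdiv. replace (/ (9/8)) with (8/9) in H4 by field.
    assert (2 * t * (8/9) <= 2 * t * / (1 + 2 * t)) by (apply Rmult_le_compat_l; lra). lra. }
  assert (3 * t / 10 <= q * (2 * t / (1 + 2 * t)) / (1 + q) ^ 2).
  { apply Rmult_le_reg_r with ((1 + q) ^ 2); [nra|].
    unfold Rdiv at 2. rewrite Rmult_assoc, Rinv_l by nra. rewrite Rmult_1_r.
    assert (q * (2 * t * (8/9)) <= q * (2 * t / (1 + 2 * t))) by (apply Rmult_le_compat_l; lra).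
    assert (0 <= t * (160 * q - 27 * (1 + q) ^ 2)) by (apply Rmult_le_pos; nra).
    nra. }
  lra.
Qed.

Definition mphi x := Rtrigo_def.tanh (softplus x).

Lemma mphi_bnd x : 0 <= mphi x <= 1.
Proof. unfold mphi. pose proof (sp_pos x). pose proof (tanh_pos (softplus x) ltac:(lra)). pose proof (tanh_bnd (softplus x)). lra. Qed.

Lemma mphi_mono a b : a <= b -> mphi a <= mphi b.
Proof. intros H. unfold mphi. apply tanh_mono, sp_mono; auto. Qed.

Lemma mphi_lip a b : Rabs (mphi a - mphi b) <= 4 * Rabs (a - b).
Proof. unfold mphi. pose proof (tanh_lip (softplus a) (softplus b)). pose proof (sp_lip a b). lra. Qed.

Lemma mphi_1 : 1/2 < mphi 1 <= 15/16.
Proof.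
  unfold mphi. rewrite tanh_sgm. unfold softplus, sigmoid.
  pose proof e_lb. pose proof e_ub. pose proof (exp_pos 1).
  set (w := 1 + exp 1) in *.
  assert (exp (- (2 * ln w)) = / (w * w)).
  { replace (- (2 * ln w)) with (- (ln w + ln w)) by ring. rewrite exp_Ropp, exp_plus, exp_ln by (unfold w; lra). auto. }
  rewrite H2.
  assert (13 <= w * w <= 15) by (unfold w; nra).
  replace (2 * / (1 + / (w * w)) - 1) with (1 - 2 * / (w * w + 1)) by (field; nra).
  assert (/ 16 <= / (w * w + 1)) by (apply Rinv_le_contravar; lra).
  assert (/ (w * w + 1) <= / 14) by (apply Rinv_le_contravar; lra).
  split; lra.
Qed.

Definition gss (t : R) : R := exp (- t ^ 2 / 2).

Lemma cont_der (f : R -> R) x : ex_derive f x -> continuous f x.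
Proof. intros H. exact (@ex_derive_continuous R_AbsRing R_NormedModule f x H). Qed.

Lemma gss_cont x : continuous gss x.
Proof. apply cont_der. unfold gss. auto_derive. auto. Qed.

Lemma exRI (f : R -> R) a b : (forall z, Rmin a b <= z <= Rmax a b -> continuous f z) -> ex_RInt f a b.
Proof. intros H. exact (@ex_RInt_continuous R_CompleteNormedModule f a b H). Qed.

Lemma gss_ex a b : ex_RInt gss a b.
Proof. apply exRI. intros; apply gss_cont. Qed.

Lemma gss_bnd t : 0 < gss t <= 1.
Proof.
  unfold gss. split; [apply exp_pos|]. rewrite <- exp_0. apply exp_mono.
  assert (0 <= t ^ 2) by (simpl; nra). lra.
Qed.

Lemma gss_int_bnd a b : a <= b -> 0 <= RInt gss a b <= b - a.
Proof.
  intros H. split.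
  - apply RInt_ge_0; auto. apply gss_ex. intros; left; apply gss_bnd.
  - replace (b - a) with (RInt (fun _ => 1) a b).
    + apply RInt_le; auto. apply gss_ex. apply ex_RInt_const. intros; apply gss_bnd.
    + rewrite RInt_const. compute. ring.
Qed.

Lemma gss_chasles a b : RInt gss 0 b - RInt gss 0 a = RInt gss a b.
Proof.
  rewrite <- (RInt_Chasles gss 0 a b) by apply gss_ex. compute. ring.
Qed.

Lemma gss_int_pos : exp (- 1 / 2) <= RInt gss 0 1.
Proof.
  replace (exp (- 1 / 2)) with (RInt (fun _ => exp (- 1 / 2)) 0 1).
  - apply RInt_le; [lra|apply ex_RInt_const|apply gss_ex|].
    intros x Hx. unfold gss.
    assert (x ^ 2 <= 1) by (simpl; nra).
    assert (Hq : - 1 / 2 <= - x ^ 2 / 2) by lra.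
    apply exp_mono; auto.
  - rewrite RInt_const. compute. ring.
Qed.

Definition gf (x s : R) : R := exp (- (x ^ 2 * (1 + s ^ 2)) / 2) / (1 + s ^ 2).
Definition gdf (x s : R) : R := - x * exp (- (x ^ 2 * (1 + s ^ 2)) / 2).
Definition Jg x := RInt (gf x) 0 1.
Definition Ig x := RInt gss 0 x.

Lemma gf_der x s : is_derive (fun u => gf u s) x (gdf x s).
Proof.
  unfold gf, gdf. auto_derive; auto.
  replace (- (x * (x * 1) * (1 + s * (s * 1))) * / 2) with (- (x ^ 2 * (1 + s ^ 2)) / 2) by (simpl; field).
  field. assert (0 <= s ^ 2) by (simpl; nra). simpl in *. lra.
Qed.

Lemma gf_cont x s : continuous (gf x) s.
Proof. apply cont_der. unfold gf. auto_derive. assert (0 <= s ^ 2) by (simpl; nra). lra. Qed.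

Lemma cpt_exp y : continuity_pt exp y.
Proof. apply continuity_pt_filterlim. apply continuous_exp. Qed.

Lemma gdf_cont2 x s : continuity_2d_pt gdf x s.
Proof.
  apply continuity_2d_pt_ext with (fun u v => (- u) * exp ((u * u) * (1 + v * v) * (- / 2))).
  { intros u v. unfold gdf. f_equal. f_equal. simpl. field. }
  apply continuity_2d_pt_mult.
  - apply continuity_2d_pt_opp. apply continuity_2d_pt_id1.
  - apply continuity_1d_2d_pt_comp with (f := exp) (g := fun u v => (u * u) * (1 + v * v) * (- / 2)).
    + apply cpt_exp.
    + apply continuity_2d_pt_mult; [apply continuity_2d_pt_mult|apply continuity_2d_pt_const].
      * apply continuity_2d_pt_mult; apply continuity_2d_pt_id1.
      * apply continuity_2d_pt_plus; [apply continuity_2d_pt_const|].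
        apply continuity_2d_pt_mult; apply continuity_2d_pt_id2.
Qed.

Lemma J_der x : is_derive Jg x (RInt (fun s => gdf x s) 0 1).
Proof.
  unfold Jg.
  assert (HD : forall u t, Derive (fun z => gf z t) u = gdf u t).
  { intros u t. apply is_derive_unique. apply gf_der. }
  rewrite <- (RInt_ext (fun t => Derive (fun u => gf u t) x)).
  2: { intros t _. apply HD. }
  apply (is_derive_RInt_param gf 0 1 x).
  - apply filter_forall. intros x0 t _. exists (gdf x0 t). apply gf_der.
  - intros t _. apply continuity_2d_pt_ext with gdf.
    + intros u v. symmetry. apply HD.
    + apply gdf_cont2.
  - apply filter_forall. intros y. apply exRI. intros z _. apply gf_cont.
Qed.

Lemma RInt_gdf x : RInt (fun s => gdf x s) 0 1 = - exp (- x ^ 2 / 2) * Ig x.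
Proof.
  apply is_RInt_unique.
  assert (H1 : is_RInt gss (x * 0 + 0) (x * 1 + 0) (Ig x)).
  { replace (x * 0 + 0) with 0 by ring. replace (x * 1 + 0) with x by ring.
    unfold Ig. apply (RInt_correct gss). apply gss_ex. }
  apply (is_RInt_comp_lin gss x 0 0 1) in H1.
  apply (is_RInt_scal _ 0 1 (- exp (- x ^ 2 / 2))) in H1.
  apply (is_RInt_ext _ _ 0 1) with (2 := H1).
  intros s _. unfold gdf, gss. unfold scal; simpl; unfold mult; simpl.
  replace (- (x * (x * 1) * (1 + s * (s * 1))) / 2) with (- (x * (x * 1)) / 2 + - ((x * s + 0) * ((x * s + 0) * 1)) / 2) by field.
  rewrite exp_plus. ring.
Qed.

Lemma I_der x : is_derive Ig x (gss x).
Proof.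
  apply (is_derive_RInt gss Ig 0 x).
  - apply filter_forall. intros b0. unfold Ig. apply (RInt_correct gss). apply gss_ex.
  - apply gss_cont.
Qed.

Definition Hg x := Ig x ^ 2 + 2 * Jg x.

Lemma H_der x : is_derive Hg x 0.
Proof.
  unfold Hg.
  apply is_derive_ext with (fun y => plus (mult (Ig y) (Ig y)) (2 * Jg y)); [intros; unfold plus, mult; simpl; unfold plus, mult; simpl; ring|].
  replace (0 : R) with (plus (plus (mult (gss x) (Ig x)) (mult (Ig x) (gss x))) (2 * (RInt (fun s => gdf x s) 0 1))).
  - apply (is_derive_plus (K := R_AbsRing) (V := R_NormedModule)).
    + apply (is_derive_mult (K := R_AbsRing)); [apply I_der|apply I_der|]. intros; apply Rmult_comm.
    + apply is_derive_scal. apply J_der.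
  - rewrite RInt_gdf. unfold gss. unfold plus, mult; simpl. unfold mult, plus; simpl. ring.
Qed.

Lemma H_0 : Hg 0 = PI / 2.
Proof.
  unfold Hg, Ig, Jg. rewrite RInt_point. 
  assert (HJ : RInt (gf 0) 0 1 = PI / 4).
  { apply is_RInt_unique.
    replace (PI / 4) with (minus (atan 1) (atan 0)) by (rewrite atan_1, atan_0; unfold minus, plus, opp; simpl; ring).
    apply (is_RInt_ext (fun s => / (1 + s²))).
    - intros s _. unfold gf. unfold Rsqr. replace (- (0 ^ 2 * (1 + s ^ 2)) / 2) with 0 by (simpl; field).
      rewrite exp_0. simpl. field. nra.
    - apply (is_RInt_derive atan (fun s => / (1 + s²))).
      + intros; apply is_derive_atan.
      + intros s _. apply cont_der. auto_derive. unfold Rsqr; nra. }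
  rewrite HJ. unfold zero; simpl. field.
Qed.

Lemma H_const x : Hg x = PI / 2.
Proof.
  rewrite <- H_0.
  destruct (MVT_gen Hg 0 x (fun _ => 0)) as [c [_ Hc]].
  - intros; apply H_der.
  - intros y _. apply continuity_pt_filterlim. apply cont_der. exists 0. apply H_der.
  - lra.
Qed.

Lemma Jg_nonneg x : 0 <= Jg x.
Proof.
  unfold Jg. apply RInt_ge_0; [lra| |].
  - apply exRI. intros; apply gf_cont.
  - intros s _. unfold gf. assert (0 <= s ^ 2) by (simpl; nra). pose proof (exp_pos (- (x ^ 2 * (1 + s ^ 2)) / 2)).
    apply Rmult_le_pos; [lra|]. left; apply Rinv_0_lt_compat; lra.
Qed.

Lemma Ig_sq x : Ig x ^ 2 <= PI / 2.
Proof. pose proof (H_const x). pose proof (Jg_nonneg x). unfold Hg in H. lra. Qed.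

Lemma Phi_eq x : Phi x = / 2 + Ig x / sqrt (2 * PI).
Proof. reflexivity. Qed.

Lemma sqrt2pi_pos : 0 < sqrt (2 * PI).
Proof. apply sqrt_lt_R0. pose proof PI_RGT_0. lra. Qed.

Lemma sqrt2pi_ge : 2.4 <= sqrt (2 * PI).
Proof.
  pose proof PI2_3_2. rewrite <- (sqrt_square 2.4) by lra. apply sqrt_le_1_alt. lra.
Qed.

Lemma Ig_div x : - / 2 <= Ig x / sqrt (2 * PI) <= / 2.
Proof.
  pose proof (Ig_sq x). pose proof sqrt2pi_pos. pose proof PI_RGT_0.
  assert (Hs : sqrt (2 * PI) * sqrt (2 * PI) = 2 * PI) by (apply sqrt_sqrt; lra).
  assert (Ig x * Ig x <= (sqrt (2 * PI) / 2) * (sqrt (2 * PI) / 2)) by (simpl in H; nra).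
  assert (Rabs (Ig x) <= sqrt (2 * PI) / 2).
  { rewrite <- (Rabs_right (sqrt (2 * PI) / 2)) by lra. apply Rsqr_le_abs_0. unfold Rsqr. lra. }
  apply Rabs_le_between in H3.
  split.
  - apply Rmult_le_reg_r with (sqrt (2 * PI)); auto. unfold Rdiv. rewrite Rmult_assoc, Rinv_l by lra. lra.
  - apply Rmult_le_reg_r with (sqrt (2 * PI)); auto. unfold Rdiv. rewrite Rmult_assoc, Rinv_l by lra. lra.
Qed.

Lemma Phi_bnd x : 0 <= Phi x <= 1.
Proof. rewrite Phi_eq. pose proof (Ig_div x). lra. Qed.

Lemma Phi_diff a b : Phi b - Phi a = RInt gss a b / sqrt (2 * PI).
Proof.
  rewrite !Phi_eq. rewrite <- gss_chasles. unfold Ig. field. apply Rgt_not_eq, sqrt2pi_pos.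
Qed.

Lemma Phi_mono a b : a <= b -> Phi a <= Phi b.
Proof.
  intros H. pose proof (Phi_diff a b). pose proof (gss_int_bnd a b H). pose proof sqrt2pi_pos.
  assert (0 <= RInt gss a b / sqrt (2 * PI)) by (apply Rmult_le_pos; [lra|left; apply Rinv_0_lt_compat; lra]).
  lra.
Qed.

Lemma Phi_lip a b : Rabs (Phi a - Phi b) <= 4 * Rabs (a - b).
Proof.
  assert (forall a b, a <= b -> Phi b - Phi a <= b - a).
  { intros u v H. rewrite Phi_diff. pose proof (gss_int_bnd u v H). pose proof sqrt2pi_ge.
    apply Rle_trans with (RInt gss u v). 2: lra.
    unfold Rdiv. rewrite <- (Rmult_1_r (RInt gss u v)) at 2. apply Rmult_le_compat_l; [lra|].
    rewrite <- Rinv_1. apply Rinv_le_contravar; lra. }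
  destruct (Rle_dec a b).
  - pose proof (H a b r). pose proof (Phi_mono a b r).
    rewrite Rabs_left1 by lra. rewrite Rabs_left1 by lra. lra.
  - pose proof (H b a ltac:(lra)). pose proof (Phi_mono b a ltac:(lra)).
    rewrite Rabs_right by lra. rewrite Rabs_right by lra. lra.
Qed.

Lemma Phi_1 : 1/2 < Phi 1 <= 15/16.
Proof.
  rewrite Phi_eq. pose proof gss_int_pos. pose proof (gss_int_bnd 0 1 ltac:(lra)).
  pose proof sqrt2pi_ge. pose proof (exp_pos (- 1 / 2)). unfold Ig.
  split.
  - assert (0 < RInt gss 0 1 / sqrt (2 * PI)) by (apply Rdiv_lt_0_compat; lra). lra.
  - assert (RInt gss 0 1 / sqrt (2 * PI) <= 1 / 2.4).
    { unfold Rdiv. apply Rmult_le_compat; try lra. left; apply Rinv_0_lt_compat; lra.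
      apply Rinv_le_contravar; lra. }
    lra.
Qed.

Notation P z := (powerRZ 2 z).

Lemma P_pos z : 0 < P z.
Proof. apply powerRZ_lt; lra. Qed.

Lemma P_add a b : P (a + b) = P a * P b.
Proof. apply powerRZ_add; lra. Qed.

Lemma P_0 : P 0 = 1.
Proof. reflexivity. Qed.

Lemma P_1 : P 1 = 2.
Proof. simpl. lra. Qed.

Lemma P_IZR k : (0 <= k)%Z -> IZR (2 ^ k) = P k.
Proof.
  intros Hk. rewrite <- (Z2Nat.id k Hk).
  rewrite <- pow_IZR. rewrite pow_powerRZ. reflexivity.
Qed.

Lemma P_ge1 k : (0 <= k)%Z -> 1 <= P k.
Proof.
  intros Hk. rewrite <- P_IZR by lia. apply IZR_le.
  assert (0 < 2 ^ k)%Z by (apply Z.pow_pos_nonneg; lia). lia.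
Qed.

Lemma P_mono a b : (a <= b)%Z -> P a <= P b.
Proof.
  intros H. replace b with (a + (b - a))%Z by lia. rewrite P_add.
  pose proof (P_pos a). pose proof (P_ge1 (b - a) ltac:(lia)). nra.
Qed.

Lemma P_lt a b : (a < b)%Z -> P a < P b.
Proof.
  intros H. replace b with ((a + 1) + (b - a - 1))%Z by lia. rewrite !P_add, P_1.
  pose proof (P_pos a). pose proof (P_ge1 (b - a - 1) ltac:(lia)). nra.
Qed.

Lemma P_S a : P (a + 1) = 2 * P a.
Proof. rewrite P_add, P_1. lra. Qed.

Lemma P_opp a : P (- a) = / P a.
Proof. apply powerRZ_neg'. Qed.

Definition sgn (b : bool) : R := if b then -1 else 1.

Lemma Rabs_sgn b : Rabs (sgn b) = 1.
Proof. destruct b; unfold sgn; [rewrite Rabs_left by lra|rewrite Rabs_right by lra]; lra. Qed.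

Lemma abs_val (b : bool) m z : (0 <= m)%Z ->
  Rabs ((if b then -1 else 1) * IZR m * P z) = IZR m * P z.
Proof.
  intros Hm. rewrite !Rabs_mult. change (if b then -1 else 1) with (sgn b).
  rewrite Rabs_sgn, (Rabs_right (P _)), (Rabs_right (IZR m)).
  - ring.
  - apply Rle_ge, IZR_le; lia.
  - apply Rle_ge; left; apply P_pos.
Qed.

Section Flt.
Variables (E M : nat).
Hypothesis hE : (5 <= E)%nat.
Hypothesis hM : (3 <= M)%nat.
Hypothesis hME : (M <= 2 ^ (E - 1))%nat.

Local Notation em := (emin E).
Local Notation eM := (emax E).
Local Notation MZ := (Z.of_nat M).

Lemma zfacts : (15 <= eM)%Z /\ em = (1 - eM)%Z /\ (MZ <= eM + 1)%Z /\ (3 <= MZ)%Z.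
Proof.
  unfold emin, emax.
  assert (H1 : (Z.of_nat M <= 2 ^ (Z.of_nat E - 1))%Z).
  { replace (Z.of_nat E - 1)%Z with (Z.of_nat (E - 1)) by lia.
    assert (Z.of_nat M <= Z.of_nat (2 ^ (E - 1)))%Z as HH by lia.
    rewrite Nat2Z.inj_pow in HH. exact HH. }
  assert (H2 : (2 ^ 4 <= 2 ^ (Z.of_nat E - 1))%Z).
  { apply Z.pow_le_mono_r; lia. }
  simpl in H2. lia.
Qed.

Lemma inF_intro b m e : (0 <= m < 2 ^ (MZ + 1))%Z -> (em <= e <= eM)%Z ->
  inF E M (sgn b * IZR m * P (e - MZ)).
Proof. intros. exists b, m, e. unfold sgn in *. repeat split; try lia; reflexivity. Qed.

Lemma inF_0 : inF E M 0.
Proof.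
  pose proof zfacts.
  replace 0 with (sgn false * IZR 0 * P (em - MZ)) by (simpl; lra).
  apply inF_intro.
  - split; [lia|]. apply Z.pow_pos_nonneg; lia.
  - lia.
Qed.

Lemma inF_opp x : inF E M x -> inF E M (- x).
Proof.
  intros [b [m [e [H1 [H2 H3]]]]]. exists (negb b), m, e. repeat split; try lia.
  rewrite H3. destruct b; simpl; lra.
Qed.

Lemma pow2M1 : (2 ^ (MZ + 1) = 2 * 2 ^ MZ)%Z.
Proof. pose proof zfacts. rewrite Z.pow_add_r by lia. lia. Qed.

Lemma inF_int j k : (Z.abs j <= 2 ^ (MZ + 1))%Z -> (em <= k <= eM - 1)%Z ->
  inF E M (IZR j * P (k - MZ)).
Proof.
  intros Hj Hk. pose proof zfacts.
  destruct (Z.eq_dec (Z.abs j) (2 ^ (MZ + 1))) as [Heq|Hne].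
  - exists (Z.ltb j 0), (2 ^ MZ)%Z, (k + 1)%Z.
    pose proof pow2M1.
    assert (0 < 2 ^ MZ)%Z by (apply Z.pow_pos_nonneg; lia).
    repeat split; try lia.
    rewrite P_IZR by lia.
    replace (k + 1 - MZ)%Z with (k - MZ + 1)%Z by lia. rewrite P_S.
    destruct (Z.ltb_spec j 0).
    + replace j with (- (2 * 2 ^ MZ))%Z by lia. rewrite opp_IZR, mult_IZR, P_IZR by lia. lra.
    + replace j with ((2 * 2 ^ MZ))%Z by lia. rewrite mult_IZR, P_IZR by lia. lra.
  - exists (Z.ltb j 0), (Z.abs j), k. repeat split; try lia.
    destruct (Z.ltb_spec j 0).
    + replace (Z.abs j) with (- j)%Z by lia. rewrite opp_IZR. lra.
    + replace (Z.abs j) with j by lia. lra.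
Qed.

Lemma Omega_eq : Omega E M = IZR (2 ^ (MZ + 1) - 1) * P (eM - MZ).
Proof.
  pose proof zfacts. unfold Omega.
  rewrite minus_IZR, P_IZR by lia. rewrite P_S.
  replace eM with (MZ + (eM - MZ))%Z at 1 by lia. rewrite P_add, P_opp.
  pose proof (P_pos MZ). field. lra.
Qed.

Lemma inF_abs_le x : inF E M x -> Rabs x <= Omega E M.
Proof.
  intros [b [m [e [H1 [H2 H3]]]]]. rewrite Omega_eq. subst x.
  rewrite abs_val by lia.
  apply Rmult_le_compat.
  - apply IZR_le; lia.
  - left; apply P_pos.
  - apply IZR_le; lia.
  - apply P_mono. lia.
Qed.

Lemma inF_min x : inF E M x -> x <> 0 -> P (em - MZ) <= Rabs x.
Proof.
  intros [b [m [e [H1 [H2 H3]]]]] Hx. subst x.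
  assert (m <> 0%Z). { intro; subst m. apply Hx. simpl. lra. }
  rewrite abs_val by lia.
  assert (1 <= IZR m) by (apply IZR_le; lia).
  assert (P (em - MZ) <= P (e - MZ)) by (apply P_mono; lia).
  pose proof (P_pos (e - MZ)). nra.
Qed.

Lemma grid x k : inF E M x -> P k <= Rabs x -> exists j, x = IZR j * P (k - MZ).
Proof.
  intros [b [m [e [H1 [H2 H3]]]]] Hk.
  destruct (Z_le_gt_dec k e).
  - exists (if b then - (m * 2 ^ (e - k)) else m * 2 ^ (e - k))%Z. subst x.
    replace (e - MZ)%Z with ((e - k) + (k - MZ))%Z by lia.
    rewrite P_add. destruct b; rewrite ?opp_IZR, mult_IZR, P_IZR by lia; simpl; lra.
  - exfalso. subst x.
    rewrite abs_val in Hk by lia.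
    assert (IZR m <= IZR (2 ^ (MZ + 1)) - 1).
    { rewrite <- minus_IZR. apply IZR_le. lia. }
    rewrite P_IZR in H by lia.
    assert (P (MZ + 1) * P (e - MZ) = P (e + 1)).
    { rewrite <- P_add. f_equal. lia. }
    assert (P (e + 1) <= P k) by (apply P_mono; lia).
    pose proof (P_pos (e - MZ)). nra.
Qed.


Definition zr (a : Z) (n : nat) : list Z := map (fun i => (a + Z.of_nat i)%Z) (seq 0 n).

Lemma in_zr a n z : (a <= z < a + Z.of_nat n)%Z -> In z (zr a n).
Proof.
  intros H. apply in_map_iff. exists (Z.to_nat (z - a)). split; [lia|]. apply in_seq. lia.
Qed.

Lemma in_zr' a n z : In z (zr a n) -> (a <= z < a + Z.of_nat n)%Z.
Proof.
  intros H. apply in_map_iff in H. destruct H as [i [H1 H2]]. apply in_seq in H2. lia.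
Qed.

Definition Flist : list R :=
  flat_map (fun b : bool => flat_map (fun m => map (fun e => (if b then -1 else 1) * IZR m * P (e - MZ))
     (zr em (Z.to_nat (eM - em + 1)))) (zr 0 (Z.to_nat (2 ^ (MZ + 1))))) (true :: false :: nil).

Lemma inF_in x : inF E M x -> In x Flist.
Proof.
  intros [b [m [e [H1 [H2 H3]]]]]. subst x. pose proof zfacts.
  apply in_flat_map. exists b. split; [destruct b; simpl; auto|].
  apply in_flat_map. exists m. split; [apply in_zr; lia|].
  apply in_map_iff. exists e. split; [auto|apply in_zr; lia].
Qed.

Lemma in_inF x : In x Flist -> inF E M x.
Proof.
  intros H. pose proof zfacts.
  apply in_flat_map in H. destruct H as [b [_ H]].
  apply in_flat_map in H. destruct H as [m [Hm H]].
  apply in_map_iff in H. destruct H as [e [He1 He2]].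
  apply in_zr' in Hm. apply in_zr' in He2.
  exists b, m, e. repeat split; try lia. auto.
Qed.

Lemma list_min (l : list R) r : l <> nil -> exists y, In y l /\ forall z, In z l -> Rabs (r - y) <= Rabs (r - z).
Proof.
  induction l as [|a l IH]; intros Hl; [congruence|].
  destruct l as [|b l'].
  - exists a. split; [left; auto|]. intros z [Hz|[]]. subst; lra.
  - destruct IH as [y [Hy1 Hy2]]; [congruence|].
    destruct (Rle_dec (Rabs (r - a)) (Rabs (r - y))).
    + exists a. split; [left; auto|]. intros z [Hz|Hz]; [subst; lra|]. specialize (Hy2 z Hz). lra.
    + exists y. split; [right; auto|]. intros z [Hz|Hz]; [subst; lra|]. auto.
Qed.

Definition canon (x : R) (b : bool) (m e : Z) : Prop :=
    (((2 ^ MZ <= m < 2 ^ (MZ + 1))%Z /\ (em <= e <= eM)%Z)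
     \/ ((0 <= m < 2 ^ MZ)%Z /\ e = em)) /\
    x = (if b then -1 else 1) * IZR m * P (e - MZ).

Lemma canon_aux : forall n m e, Z.of_nat n = (e - em)%Z -> (0 <= m < 2 ^ (MZ + 1))%Z -> (em <= e <= eM)%Z ->
  exists m' e', canon (IZR m * P (e - MZ)) false m' e'.
Proof.
  pose proof zfacts. pose proof pow2M1.
  assert (0 < 2 ^ MZ)%Z by (apply Z.pow_pos_nonneg; lia).
  induction n as [|n IH]; intros m e Hn Hm He.
  - destruct (Z_le_gt_dec (2 ^ MZ) m).
    + exists m, e. split; [left; lia|]. simpl. ring.
    + exists m, e. split; [right; lia|]. simpl. ring.
  - destruct (Z_le_gt_dec (2 ^ MZ) m).
    + exists m, e. split; [left; lia|]. simpl. ring.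
    + destruct (IH (2 * m)%Z (e - 1)%Z) as [m' [e' [Hc Heq]]]; try lia.
      exists m', e'. split; auto. rewrite <- Heq, mult_IZR.
      replace (e - MZ)%Z with ((e - 1 - MZ) + 1)%Z by lia. rewrite P_S. simpl. ring.
Qed.

Lemma canon_ex x : inF E M x -> exists b m e, canon x b m e.
Proof.
  intros [b [m [e [H1 [H2 H3]]]]].
  destruct (canon_aux (Z.to_nat (e - em)) m e) as [m' [e' [Hc Heq]]]; try lia.
  exists b, m', e'. split; auto. rewrite H3. simpl in Heq. rewrite Rmult_assoc, Heq. ring.
Qed.

Definition lbz (x : R) := last_bit_zero E M x.

Lemma lbz_0 : lbz 0.
Proof.
  pose proof zfacts. exists false, 0%Z, em. split; [right; split; [split; [lia|apply Z.pow_pos_nonneg; lia]|auto]|].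
  split; [simpl; ring|auto].
Qed.

Lemma lbz_opp x : lbz x -> lbz (- x).
Proof.
  intros [b [m [e [H1 [H2 H3]]]]]. exists (negb b), m, e. split; auto. split; auto.
  rewrite H2. destruct b; simpl; ring.
Qed.

Lemma canon_pos x b m e : canon x b m e -> 0 < x -> b = false.
Proof.
  intros [Hc Hx] Hp. destruct b; auto. exfalso.
  assert (0 <= IZR m) by (apply IZR_le; destruct Hc; lia).
  pose proof (P_pos (e - MZ)). subst x. nra.
Qed.

Lemma consec_pos y z : inF E M y -> inF E M z -> 0 < y -> y < z ->
  (forall w, inF E M w -> y < w < z -> False) -> lbz y \/ lbz z.
Proof.
  intros Hy Hz Hy0 Hyz Hno. pose proof zfacts. pose proof pow2M1.
  assert (0 < 2 ^ MZ)%Z by (apply Z.pow_pos_nonneg; lia).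
  destruct (canon_ex y Hy) as [b1 [m1 [e1 Hc1]]].
  destruct (canon_ex z Hz) as [b2 [m2 [e2 Hc2]]].
  assert (b1 = false) by (eapply canon_pos; eauto).
  assert (b2 = false) by (eapply canon_pos; [eauto|lra]). subst b1 b2.
  destruct (Z.even m1) eqn:Ev1.
  { left. exists false, m1, e1. destruct Hc1 as [Hc1 Hc1']. auto. }
  destruct (Z.even m2) eqn:Ev2.
  { right. exists false, m2, e2. destruct Hc2 as [Hc2 Hc2']. auto. }
  exfalso. destruct Hc1 as [Hc1 Hy'], Hc2 as [Hc2 Hz']. simpl in Hy', Hz'.
  assert (Ev : Z.even (2 ^ MZ) = true).
  { rewrite Z.even_pow by lia. reflexivity. }
  destruct (Z.lt_total e1 e2) as [Hlt|[Heq|Hgt]].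
  -
    assert (Hz2 : (2 ^ MZ <= m2 < 2 ^ (MZ + 1))%Z /\ (em <= e2 <= eM)%Z) by (destruct Hc1, Hc2; lia).
    apply (Hno (P e2)).
    + replace (P e2) with (sgn false * IZR (2 ^ MZ) * P (e2 - MZ)).
      * apply inF_intro; lia.
      * unfold sgn. rewrite P_IZR by lia. rewrite Rmult_1_l, <- P_add. replace (MZ + (e2 - MZ))%Z with e2 by lia. ring.
    + split.
      * rewrite Hy'. assert (Hb1 : IZR m1 <= IZR (2 ^ (MZ + 1)) - 1).
        { rewrite <- minus_IZR. apply IZR_le. destruct Hc1; lia. }
        rewrite P_IZR in Hb1 by lia.
        assert (P (MZ + 1) * P (e1 - MZ) = P (e1 + 1)) by (rewrite <- P_add; f_equal; lia).
        assert (P (e1 + 1) <= P e2) by (apply P_mono; lia).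
        pose proof (P_pos (e1 - MZ)). nra.
      * rewrite Hz'. assert (m2 <> 2 ^ MZ)%Z by (intro; subst; congruence).
        assert (Hb2 : IZR (2 ^ MZ) + 1 <= IZR m2) by (rewrite <- plus_IZR; apply IZR_le; lia).
        rewrite P_IZR in Hb2 by lia.
        assert (P MZ * P (e2 - MZ) = P e2) by (rewrite <- P_add; f_equal; lia).
        pose proof (P_pos (e2 - MZ)). nra.
  - subst e2. assert (Hm : IZR m1 < IZR m2).
    { rewrite Hy', Hz' in Hyz. pose proof (P_pos (e1 - MZ)). nra. }
    apply lt_IZR in Hm.
    assert (m1 + 1 <> m2)%Z by (intro; subst; rewrite Z.even_add in Ev2; rewrite Ev1 in Ev2; discriminate).
    apply (Hno (IZR (m1 + 1) * P (e1 - MZ))).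
    + replace (IZR (m1 + 1) * P (e1 - MZ)) with (sgn false * IZR (m1 + 1) * P (e1 - MZ)) by (unfold sgn; ring).
      apply inF_intro; destruct Hc1, Hc2; lia.
    + rewrite Hy', Hz'. rewrite plus_IZR. pose proof (P_pos (e1 - MZ)).
      assert (IZR m1 + 1 < IZR m2) by (rewrite <- plus_IZR; apply IZR_lt; lia). nra.
  - (* y normal, y >= P e1 > z *)
    assert (Hy2 : (2 ^ MZ <= m1)%Z) by (destruct Hc1, Hc2; lia).
    assert (Hb3 : IZR m2 <= IZR (2 ^ (MZ + 1)) - 1).
    { rewrite <- minus_IZR. apply IZR_le. destruct Hc2; lia. }
    assert (Hb4 : IZR (2 ^ MZ) <= IZR m1) by (apply IZR_le; lia).
    rewrite P_IZR in Hb3, Hb4 by lia.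
    assert (P (MZ + 1) * P (e2 - MZ) = P (e2 + 1)) by (rewrite <- P_add; f_equal; lia).
    assert (P MZ * P (e1 - MZ) = P e1) by (rewrite <- P_add; f_equal; lia).
    assert (P (e2 + 1) <= P e1) by (apply P_mono; lia).
    pose proof (P_pos (e1 - MZ)). pose proof (P_pos (e2 - MZ)). nra.
Qed.

Lemma consec_even y z : inF E M y -> inF E M z -> y < z ->
  (forall w, inF E M w -> y < w < z -> False) -> lbz y \/ lbz z.
Proof.
  intros Hy Hz Hyz Hno.
  destruct (Rlt_le_dec 0 y).
  - apply consec_pos; auto.
  - destruct (Rle_lt_dec 0 z).
    + destruct (Req_dec y 0); [subst; left; apply lbz_0|].
      destruct (Req_dec z 0); [subst; right; apply lbz_0|].
      exfalso. apply (Hno 0 inF_0). lra.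
    + destruct (consec_pos (- z) (- y)) as [H|H]; try apply inF_opp; auto; try lra.
      * intros w Hw Hw'. apply (Hno (- w)); [apply inF_opp; auto|lra].
      * right. replace z with (- - z) by ring. apply lbz_opp; auto.
      * left. replace y with (- - y) by ring. apply lbz_opp; auto.
Qed.

Lemma round_exists r : exists y, round_spec E M r y.
Proof.
  destruct (list_min Flist r) as [y [Hy1 Hy2]].
  { intro H. pose proof (inF_in 0 inF_0). rewrite H in H0. destruct H0. }
  apply in_inF in Hy1.
  assert (Hmin : forall z, inF E M z -> Rabs (r - y) <= Rabs (r - z)).
  { intros z Hz. apply Hy2, inF_in; auto. }
  destruct (classic (exists z, inF E M z /\ Rabs (r - z) = Rabs (r - y) /\ z <> y)) as [[z [Hz [Hd Hzy]]]|Hno].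
  - assert (Hz2 : z = 2 * r - y).
    { destruct (Rcase_abs (r - z)), (Rcase_abs (r - y)).
      - rewrite !Rabs_left in Hd by lra. lra.
      - rewrite Rabs_left in Hd by lra. rewrite Rabs_right in Hd by lra. lra.
      - rewrite Rabs_right in Hd by lra. rewrite Rabs_left in Hd by lra. lra.
      - rewrite !Rabs_right in Hd by lra. lra. }
    assert (Hbetw : forall a b, a < b -> (a = y /\ b = z) \/ (a = z /\ b = y) ->
               forall w, inF E M w -> a < w < b -> False).
    { intros a b Hab Hc w Hw Hw'. specialize (Hmin w Hw).
      assert (Rabs (r - w) < Rabs (r - y)).
      { destruct Hc as [[-> ->]|[-> ->]];
        destruct (Rcase_abs (r - w)), (Rcase_abs (r - y)); try rewrite (Rabs_left (r - w)) by lra;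
        try rewrite (Rabs_right (r - w)) by lra; try rewrite (Rabs_left (r - y)) by lra;
        try rewrite (Rabs_right (r - y)) by lra; lra. }
      lra. }
    assert (Hev : lbz y \/ lbz z).
    { destruct (Rlt_le_dec y z).
      - apply consec_even; auto. intros w Hw Hw'. eapply (Hbetw y z); eauto.
      - assert (z < y) by (destruct r0; [auto|congruence]).
        destruct (consec_even z y) as [Hq|Hq]; auto. intros w Hw Hw'. eapply (Hbetw z y); eauto. }
    destruct Hev as [Hev|Hev].
    + exists y. refine (conj Hy1 (conj Hmin _)). intros; exact Hev.
    + exists z. split; auto. split.
      * intros w Hw. rewrite Hd. auto.
      * intros w _ _ _. exact Hev.
  - exists y. split; auto. split; auto. intros z Hz Hd Hzy. exfalso. apply Hno. exists z. auto.
Qed.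


Definition rv (r : R) : R := epsilon (inhabits 0) (round_spec E M r).

Lemma rv_spec r : round_spec E M r (rv r).
Proof. unfold rv. apply epsilon_spec. apply round_exists. Qed.

Lemma rv_inF r : inF E M (rv r).
Proof. apply rv_spec. Qed.

Lemma rv_near r z : inF E M z -> Rabs (r - rv r) <= Rabs (r - z).
Proof. intros. apply rv_spec; auto. Qed.

Lemma rv_exact x : inF E M x -> rv x = x.
Proof.
  intros Hx. pose proof (rv_near x x Hx). rewrite Rminus_diag, Rabs_R0 in H.
  pose proof (Rabs_pos (x - rv x)). assert (Rabs (x - rv x) = 0) by lra.
  apply Rabs_eq_0 in H1. lra.
Qed.

Lemma rv_mono r1 r2 : r1 <= r2 -> rv r1 <= rv r2.
Proof.
  intros H. destruct (Req_dec r1 r2) as [<-|Hne]; [lra|].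
  destruct (Rle_lt_dec (rv r1) (rv r2)) as [|Hlt]; auto. exfalso.
  pose proof (Rsqr_le_abs_1 _ _ (rv_near r1 (rv r2) (rv_inF r2))).
  pose proof (Rsqr_le_abs_1 _ _ (rv_near r2 (rv r1) (rv_inF r1))).
  unfold Rsqr in *. nra.
Qed.

Definition cc := P eM * eps M.

Lemma cc_eq : cc = P (eM - MZ - 1).
Proof. unfold cc, eps. rewrite <- P_add. f_equal. lia. Qed.

Lemma rnd_fin r : - Omega E M - cc < r < Omega E M + cc -> rnd E M (Finite r) = FNum (rv r).
Proof.
  intros H. unfold rnd. fold cc.
  destruct (Rle_dec r (- Omega E M - cc)); [lra|].
  destruct (Rle_dec (Omega E M + cc) r); [lra|]. reflexivity.
Qed.

Lemma rnd_fin' r : Rabs r <= Omega E M -> rnd E M (Finite r) = FNum (rv r).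
Proof.
  intros H. apply rnd_fin. pose proof (P_pos (eM - MZ - 1)). rewrite cc_eq.
  apply Rabs_le_between in H. lra.
Qed.

Lemma approx r k : (em <= k <= eM - 1)%Z -> Rabs r <= P (k + 1) ->
  exists z, inF E M z /\ Rabs (r - z) <= P (k - MZ).
Proof.
  intros Hk Hr. pose proof zfacts. pose proof pow2M1.
  set (u := P (k - MZ)). assert (Hu : 0 < u) by apply P_pos.
  destruct (archimed (r / u)) as [H1 H2].
  set (j := (up (r / u) - 1)%Z).
  assert (Hj1 : IZR j <= r / u) by (unfold j; rewrite minus_IZR; simpl; lra).
  assert (Hj2 : r / u - 1 < IZR j) by (unfold j; rewrite minus_IZR; simpl; lra).
  assert (Hru : Rabs (r / u) <= IZR (2 ^ (MZ + 1))).
  { rewrite P_IZR by lia. unfold Rdiv. rewrite Rabs_mult, (Rabs_right (/ u)) by (apply Rle_ge; left; apply Rinv_0_lt_compat; auto).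
    replace (P (MZ + 1)) with (P (k + 1) * / u).
    - apply Rmult_le_compat_r; auto. left; apply Rinv_0_lt_compat; auto.
    - unfold u. replace (k + 1)%Z with ((MZ + 1) + (k - MZ))%Z by lia. rewrite P_add. field. apply Rgt_not_eq, P_pos. }
  apply Rabs_le_between in Hru.
  exists (IZR j * u). split.
  - apply inF_int; auto.
    assert (IZR j <= IZR (2 ^ (MZ + 1))) by lra.
    assert (IZR (- 2 ^ (MZ + 1) - 1) < IZR j) by (rewrite minus_IZR, opp_IZR; lra).
    apply le_IZR in H3. apply lt_IZR in H4. lia.
  - assert (r = (r / u) * u) by (field; lra).
    rewrite Rabs_right.
    + rewrite H3 at 1. nra.
    + rewrite H3 at 1. nra.
Qed.

Lemma rv_err r k : (em <= k <= eM - 1)%Z -> Rabs r <= P (k + 1) -> Rabs (r - rv r) <= P (k - MZ).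
Proof.
  intros Hk Hr. destruct (approx r k Hk Hr) as [z [Hz1 Hz2]].
  pose proof (rv_near r z Hz1). lra.
Qed.

Lemma rv_zero r : 0 <= r < P (em - MZ) / 2 -> rv r = 0.
Proof.
  intros Hr. pose proof (rv_near r 0 inF_0).
  destruct (Req_dec (rv r) 0) as [|Hne]; auto. exfalso.
  pose proof (inF_min _ (rv_inF r) Hne).
  rewrite Rminus_0_r, (Rabs_right r) in H by lra.
  pose proof (Rabs_triang_inv (rv r) r). rewrite Rabs_minus_sym in H1.
  rewrite (Rabs_right r) in H1 by lra. lra.
Qed.

Lemma rv_strict r1 r2 k : (em <= k <= eM - 1)%Z -> P k <= r1 -> r1 + P (k - MZ) <= P (k + 1) ->
  r1 + P (k - MZ) < r2 -> rv r1 < rv r2.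
Proof.
  intros Hk H1 H2 H3. pose proof zfacts. pose proof pow2M1.
  set (u := P (k - MZ)) in *. assert (Hu : 0 < u) by apply P_pos.
  assert (HPk : P k = IZR (2 ^ MZ) * u).
  { rewrite P_IZR by lia. unfold u. rewrite <- P_add. f_equal; lia. }
  assert (HPk1 : P (k + 1) = 2 * IZR (2 ^ MZ) * u) by (rewrite P_S, HPk; ring).
  set (x := r1 / u).
  assert (Hr1 : r1 = x * u) by (unfold x; field; lra).
  destruct (archimed (x - 1/2)) as [A1 A2]. set (n := up (x - 1/2)) in *.
  set (a := IZR n * u). set (b := IZR (n + 1) * u).
  assert (Hn1 : (2 ^ MZ <= n)%Z).
  { assert (IZR (2 ^ MZ) <= x) by (rewrite HPk in H1; nra).
    assert (Hq : IZR (2 ^ MZ) - 1 < IZR n) by lra. rewrite <- minus_IZR in Hq. apply lt_IZR in Hq. lia. }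
  assert (Hn2 : (n < 2 ^ (MZ + 1))%Z).
  { assert (x + 1 <= 2 * IZR (2 ^ MZ)) by (rewrite HPk1 in H2; nra).
    assert (Hq : IZR n < IZR (2 ^ (MZ + 1))) by (rewrite H0, mult_IZR; simpl; lra). apply lt_IZR in Hq. lia. }
  assert (Ha : inF E M a) by (apply inF_int; lia).
  assert (Hb : inF E M b) by (apply inF_int; lia).
  assert (Hab : b = a + u) by (unfold a, b; rewrite plus_IZR; simpl; ring).
  assert (Hak : P k <= a) by (unfold a; rewrite HPk; apply Rmult_le_compat_r; [lra|apply IZR_le; lia]).
  assert (Hm1 : r1 < a + u / 2) by (unfold a; rewrite Hr1; nra).
  assert (Hm2 : a - u / 2 <= r1) by (unfold a; rewrite Hr1; nra).
  assert (Hm3 : a + u / 2 < r2) by (unfold a; rewrite Hr1 in H3; nra).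
  assert (Hgrid : forall y, inF E M y -> a < y -> b <= y).
  { intros y Hy Hay. destruct (grid y k Hy) as [i Hi].
    - rewrite Rabs_right; lra.
    - fold u in Hi. subst y. unfold a in Hay.
      assert (Hq : IZR n < IZR i) by (apply Rmult_lt_reg_r with u; auto).
      apply lt_IZR in Hq. unfold b. apply Rmult_le_compat_r; [lra|apply IZR_le; lia]. }
  assert (Hy1 : rv r1 <= a).
  { destruct (Rle_lt_dec (rv r1) a) as [|Hlt]; auto. exfalso.
    pose proof (Hgrid _ (rv_inF r1) Hlt) as Hq1.
    pose proof (rv_near r1 a Ha) as Hq2.
    rewrite (Rabs_left (r1 - rv r1)) in Hq2 by lra.
    assert (Rabs (r1 - a) <= u / 2) by (apply Rabs_le; lra). lra. }
  assert (Hy2 : b <= rv r2).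
  { destruct (Rle_lt_dec b (rv r2)) as [|Hlt]; auto. exfalso.
    assert (rv r2 <= a).
    { destruct (Rle_lt_dec (rv r2) a); auto. pose proof (Hgrid _ (rv_inF r2) r). lra. }
    pose proof (rv_near r2 b Hb) as Hq2.
    rewrite (Rabs_right (r2 - rv r2)) in Hq2 by lra.
    assert (Rabs (r2 - b) < r2 - a).
    { destruct (Rle_lt_dec b r2); [rewrite Rabs_right by lra|rewrite Rabs_left by lra]; lra. }
    lra. }
  lra.
Qed.

Lemma fsucc_eq eta eta' : inF E M eta -> inF E M eta' -> eta < eta' ->
  (forall w, inF E M w -> eta < w < eta' -> False) -> fsucc E M eta = FNum eta'.
Proof.
  intros He He' Hlt Hno.
  assert (Hs : fsucc_spec E M eta (FNum eta')).
  { split; [exact He'|]. split.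
    - split; [simpl; lra|]. intro Hq; injection Hq; lra.
    - intros w Hw [Hw1 Hw2]. destruct w as [r| | |]; simpl in *; auto.
      destruct (Rle_lt_dec eta' r); auto. exfalso. apply (Hno r Hw).
      split; auto. destruct Hw1; auto. subst; congruence. }
  assert (Hz : fsucc_spec E M eta (fsucc E M eta)) by (unfold fsucc; apply epsilon_spec; eauto).
  destruct Hz as [Hz1 [Hz2 Hz3]]. destruct Hs as [Hs1 [Hs2 Hs3]].
  specialize (Hz3 _ Hs1 Hs2).
  destruct (fsucc E M eta) as [r| | |] eqn:Eq; simpl in *.
  - specialize (Hs3 (FNum r) Hz1 Hz2). simpl in Hs3. f_equal; lra.
  - contradiction.
  - destruct Hz2; contradiction.
  - contradiction.
Qed.


Lemma rndf_num sg x : - Omega E M - cc < sg x < Omega E M + cc ->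
  rndf E M sg (FNum x) = FNum (rv (sg x)).
Proof. intros H. unfold rndf. apply rnd_fin. auto. Qed.

Lemma cond1_gen (sg : R -> R) (c1 c2 eta eta' lam : R) :
  (forall x, inF E M x -> - Omega E M - cc < sg x < Omega E M + cc) ->
  inF E M c1 -> inF E M c2 -> rv (sg c1) = 0 ->
  eps M / 2 + 2 * eps M ^ 2 <= Rabs (rv (sg c2)) <= 5 / 4 - 2 * eps M ->
  Rmax (Rabs c1) (Rabs c2) >= P (em + 1) ->
  (forall x, inF E M x -> Rmin c1 c2 <= x <= Rmax c1 c2 ->
      Rmin 0 (rv (sg c2)) <= rv (sg x) <= Rmax 0 (rv (sg c2))) ->
  inF E M eta -> inF E M eta' -> eta < eta' -> (forall w, inF E M w -> eta < w < eta' -> False) ->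
  P (em + 5) <= Rabs eta <= 4 - 8 * eps M ->
  P (em + 5) <= Rabs (rv (sg eta)) <= P (eM - 6) * Rabs eta ->
  P (em + 5) <= Rabs (rv (sg eta')) <= P (eM - 6) * Rabs eta ->
  (forall x, inF E M x -> x <= eta -> rv (sg x) <= rv (sg eta)) ->
  rv (sg eta) < rv (sg eta') ->
  (forall y, inF E M y -> eta' <= y -> rv (sg eta') <= rv (sg y)) ->
  0 <= lam <= P (eM - 7) * Rmin (Rabs (rv (sg eta))) (P (MZ + 3)) ->
  (forall x, inF E M x -> x <= eta -> Rabs (rv (sg x) - rv (sg eta)) <= lam * Rabs (x - eta)) ->
  (forall y, inF E M y -> eta' <= y -> Rabs (rv (sg y) - rv (sg eta')) <= lam * Rabs (y - eta')) ->
  Condition1 E M (rndf E M sg).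
Proof.
  intros Hr Hc1 Hc2 Hz Hv Hmax Hbet He He' Hlt Hno Heta Hs0 Hs1 Hleft Hst Hright Hlam Hx3 Hy3.
  split.
  - exists c1, c2, (rv (sg c2)). repeat split; auto.
    + rewrite rndf_num by auto. rewrite Hz. auto.
    + rewrite rndf_num by auto. auto.
    + lra.
    + lra.
    + intros x Hx Hb. exists (rv (sg x)). split; [apply rndf_num; auto|]. apply Hbet; auto.
  - exists eta, (rv (sg eta)), (rv (sg eta')). cbv zeta.
    rewrite (fsucc_eq eta eta') by auto.
    split; [auto|]. split; [auto|]. split; [apply rndf_num; auto|]. split; [apply rndf_num; auto|].
    split; [auto|]. split; [auto|]. split.
    + intros x y Hx Hy Hxe Hye. left. simpl in Hye.
      rewrite !rndf_num by auto. simpl. split; [apply Hleft; auto|]. split; auto.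
    + exists lam. split; auto. intros x y Hx Hy Hxe Hye. simpl in Hye. split.
      * exists (rv (sg x)). split; [apply rndf_num; auto|]. apply Hx3; auto.
      * exists (rv (sg y)). split; [apply rndf_num; auto|]. simpl. apply Hy3; auto.
Qed.


Lemma c3_near a b ua ub sa sb e g L lam : 0 < g -> (a <> b -> g <= Rabs (a - b)) -> (a = b -> ua = ub) ->
  Rabs (sa - ua) <= e -> Rabs (sb - ub) <= e -> Rabs (sa - sb) <= L * Rabs (a - b) ->
  2 * e <= (lam - L) * g -> L <= lam -> Rabs (ua - ub) <= lam * Rabs (a - b).
Proof.
  intros Hg Hab Heq H1 H2 H3 H4 H5.
  destruct (Req_dec a b) as [->|Hne].
  - rewrite (Heq eq_refl), !Rminus_diag, Rabs_R0. lra.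
  - specialize (Hab Hne). pose proof (Rabs_triang (ua - sa) (sa - ub)).
    pose proof (Rabs_triang (sa - sb) (sb - ub)).
    replace (ua - sa + (sa - ub)) with (ua - ub) in H by ring.
    replace (sa - sb + (sb - ub)) with (sa - ub) in H0 by ring.
    rewrite Rabs_minus_sym in H1.
    assert ((lam - L) * g <= (lam - L) * Rabs (a - b)) by (apply Rmult_le_compat_l; lra).
    lra.
Qed.

Definition hh := P (- MZ).

Lemma nums : 0 < hh <= 1/8 /\ eps M = hh / 2 /\ 256 <= P (eM - 7) /\ 512 <= P (eM - 6) /\
  64 <= P (MZ + 3) /\ P (em + 5) <= 1/512 /\ P (em + 1) <= 1/32 /\
  P (-1 - MZ) = hh / 2 /\ P (-2 - MZ) = hh / 4 /\ P (1 - MZ) = 2 * hh /\ P (-5 - MZ) = hh / 32 /\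
  P (0 - MZ) = hh.
Proof.
  pose proof zfacts. unfold hh.
  assert (HP : forall k, (k <= - MZ)%Z -> (- MZ = k + (- MZ - k))%Z) by (intros; lia).
  repeat split.
  - apply P_pos.
  - replace (1/8) with (P (-3)) by (simpl; field). apply P_mono. lia.
  - unfold eps. replace (- MZ - 1)%Z with (- MZ + - 1)%Z by lia. rewrite P_add. simpl. field.
  - replace 256 with (P 8) by (simpl; ring). apply P_mono. lia.
  - replace 512 with (P 9) by (simpl; ring). apply P_mono. lia.
  - replace 64 with (P 6) by (simpl; ring). apply P_mono. lia.
  - replace (1/512) with (P (-9)) by (simpl; field). apply P_mono. lia.
  - replace (1/32) with (P (-5)) by (simpl; field). apply P_mono. lia.
  - replace (-1 - MZ)%Z with (- MZ + - 1)%Z by lia. rewrite P_add. simpl. field.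
  - replace (-2 - MZ)%Z with (- MZ + - 2)%Z by lia. rewrite P_add. simpl. field.
  - replace (1 - MZ)%Z with (- MZ + 1)%Z by lia. rewrite P_add. simpl. field.
  - replace (-5 - MZ)%Z with (- MZ + - 5)%Z by lia. rewrite P_add. simpl. field.
Qed.

Lemma P_as_int k : IZR (2 ^ MZ) * P (k - MZ) = P k.
Proof. rewrite P_IZR by lia. rewrite <- P_add. f_equal. lia. Qed.

Lemma inF_P k : (em <= k <= eM)%Z -> inF E M (P k).
Proof.
  intros Hk. pose proof zfacts. pose proof pow2M1.
  rewrite <- P_as_int. replace (IZR (2 ^ MZ) * P (k - MZ)) with (sgn false * IZR (2 ^ MZ) * P (k - MZ)) by (unfold sgn; ring).
  apply inF_intro; [|lia]. split; [|lia]. assert (0 < 2 ^ MZ)%Z by (apply Z.pow_pos_nonneg; lia). lia.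
Qed.

Lemma inF_1 : inF E M 1.
Proof. pose proof zfacts. replace 1 with (P 0) by reflexivity. apply inF_P. lia. Qed.

Lemma inF_m3 : inF E M (-3) /\ -3 = IZR (- (3 * 2 ^ (MZ - 1))) * P (1 - MZ).
Proof.
  pose proof zfacts. pose proof pow2M1.
  assert (Hm : (2 ^ MZ = 2 * 2 ^ (MZ - 1))%Z).
  { replace MZ with ((MZ - 1) + 1)%Z at 1 by lia. rewrite Z.pow_add_r by lia. lia. }
  assert (Heq : -3 = IZR (- (3 * 2 ^ (MZ - 1))) * P (1 - MZ)).
  { rewrite opp_IZR, mult_IZR, P_IZR by lia. replace (1 - MZ)%Z with (- (MZ - 1))%Z by lia. rewrite P_opp.
    field. apply Rgt_not_eq, P_pos. }
  split; auto. rewrite Heq. apply inF_int; [|lia].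
  assert (0 < 2 ^ (MZ - 1))%Z by (apply Z.pow_pos_nonneg; lia). lia.
Qed.

Lemma rng_le x : Rabs x <= Omega E M -> - Omega E M - cc < x < Omega E M + cc.
Proof. intros H. rewrite cc_eq. pose proof (P_pos (eM - MZ - 1)). apply Rabs_le_between in H. lra. Qed.

Lemma rv_le_f r z : inF E M z -> r <= z -> rv r <= z.
Proof. intros Hz H. rewrite <- (rv_exact z Hz). apply rv_mono; auto. Qed.

Lemma rv_ge_f r z : inF E M z -> z <= r -> z <= rv r.
Proof. intros Hz H. rewrite <- (rv_exact z Hz). apply rv_mono; auto. Qed.

Lemma succ_gen j k : (em <= k <= eM - 1)%Z -> (Z.abs j <= 2 ^ (MZ + 1))%Z -> (Z.abs (j + 1) <= 2 ^ (MZ + 1))%Z ->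
  ((2 ^ MZ <= j)%Z \/ (j + 1 <= - 2 ^ MZ)%Z) ->
  inF E M (IZR j * P (k - MZ)) /\ inF E M (IZR (j + 1) * P (k - MZ)) /\
  IZR j * P (k - MZ) < IZR (j + 1) * P (k - MZ) /\
  (forall w, inF E M w -> IZR j * P (k - MZ) < w < IZR (j + 1) * P (k - MZ) -> False).
Proof.
  intros Hk Hj1 Hj2 Hj3. pose proof (P_pos (k - MZ)). pose proof zfacts.
  split; [apply inF_int; auto|]. split; [apply inF_int; auto|].
  split; [rewrite plus_IZR; lra|].
  intros w Hw Hb.
  assert (HPk : P k <= Rabs w).
  { rewrite <- P_as_int. destruct Hj3 as [Hj3|Hj3].
    - rewrite Rabs_right by (assert (0 <= IZR j) by (apply IZR_le; assert (0 < 2 ^ MZ)%Z by (apply Z.pow_pos_nonneg; lia); lia); nra).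
      assert (IZR (2 ^ MZ) <= IZR j) by (apply IZR_le; lia). nra.
    - assert (IZR (j + 1) <= - IZR (2 ^ MZ)) by (rewrite <- opp_IZR; apply IZR_le; lia).
      assert (0 < IZR (2 ^ MZ)) by (apply IZR_lt; apply Z.pow_pos_nonneg; lia).
      rewrite Rabs_left by nra. nra. }
  destruct (grid w k Hw HPk) as [i Hi]. subst w.
  assert (IZR j < IZR i) by (apply Rmult_lt_reg_r with (P (k - MZ)); lra).
  assert (IZR i < IZR (j + 1)) by (apply Rmult_lt_reg_r with (P (k - MZ)); lra).
  apply lt_IZR in H1. apply lt_IZR in H2. lia.
Qed.

Lemma gap w j k : inF E M w -> P k <= Rabs w -> w <> IZR j * P (k - MZ) -> P (k - MZ) <= Rabs (w - IZR j * P (k - MZ)).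
Proof.
  intros Hw Hk Hne. destruct (grid w k Hw Hk) as [i Hi]. subst w.
  pose proof (P_pos (k - MZ)).
  assert (i <> j) by (intro; subst; apply Hne; auto).
  replace (IZR i * P (k - MZ) - IZR j * P (k - MZ)) with (IZR (i - j) * P (k - MZ)) by (rewrite minus_IZR; ring).
  rewrite Rabs_mult, (Rabs_right (P _)) by lra.
  assert (1 <= Rabs (IZR (i - j))).
  { destruct (Z_le_gt_dec 1 (i - j)).
    - rewrite Rabs_right; [apply IZR_le; lia|apply Rle_ge, IZR_le; lia].
    - rewrite Rabs_left; [|apply IZR_lt; lia]. rewrite <- opp_IZR. apply IZR_le. lia. }
  nra.
Qed.

Lemma eta1 : let h := hh in
  inF E M 1 /\ inF E M (1 + h) /\ 1 < 1 + h /\ (forall w, inF E M w -> 1 < w < 1 + h -> False) /\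
  (forall x, inF E M x -> 1/2 <= x -> x <> 1 -> h / 2 <= Rabs (x - 1)) /\
  (forall x, inF E M x -> 1 <= x -> x <> 1 + h -> h <= Rabs (x - (1 + h))).
Proof.
  intros h. pose proof zfacts. pose proof pow2M1. pose proof nums.
  assert (0 < 2 ^ MZ)%Z by (apply Z.pow_pos_nonneg; lia).
  assert (E1 : IZR (2 ^ MZ) * P (0 - MZ) = 1) by (rewrite P_as_int; reflexivity).
  assert (E2 : IZR (2 ^ MZ + 1) * P (0 - MZ) = 1 + h).
  { rewrite plus_IZR, Rmult_plus_distr_r, E1. unfold h, hh. replace (0 - MZ)%Z with (- MZ)%Z by lia. ring. }
  destruct (succ_gen (2 ^ MZ) 0) as [A1 [A2 [A3 A4]]]; try lia.
  rewrite E1, E2 in *. split; auto. split; auto. split; auto. split; auto. split.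
  - intros x Hx Hx1 Hx2.
    assert (E3 : IZR (2 ^ (MZ + 1)) * P (-1 - MZ) = 1).
    { rewrite P_IZR by lia. rewrite <- P_add. replace (MZ + 1 + (-1 - MZ))%Z with 0%Z by lia. reflexivity. }
    assert (Hp : P (-1) <= Rabs x) by (replace (P (-1)) with (1/2) by (simpl; field); rewrite Rabs_right; lra).
    pose proof (gap x (2 ^ (MZ + 1)) (-1) Hx Hp) as G. rewrite E3 in G.
    replace (h / 2) with (P (-1 - MZ)) by (unfold h; lra). apply G; auto.
  - intros y Hy Hy1 Hy2. rewrite <- E2. replace h with (P (0 - MZ)) by (unfold h, hh; f_equal; lia).
    apply gap; auto. rewrite Rabs_right by lra. simpl; lra. rewrite E2; auto.
Qed.


Lemma cc_pos : 0 < cc.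
Proof. rewrite cc_eq. apply P_pos. Qed.

Lemma Pem1 : P (em + 1) <= 1.
Proof. pose proof nums. lra. Qed.

Lemma eps_facts : eps M / 2 + 2 * eps M ^ 2 <= 1/16 /\ 9/8 <= 5/4 - 2 * eps M /\ 8 * eps M <= 1/2.
Proof.
  pose proof nums as [Hh [Heps _]]. rewrite Heps. simpl. split; [nra|]. split; lra.
Qed.

Lemma cond_relu (sg : R -> R) : (forall x, 0 <= x -> sg x = x) -> (forall x, x <= 0 -> x <= sg x <= 0) ->
  Condition1 E M (rndf E M sg).
Proof.
  intros Hp Hn. pose proof nums as [Hh [Heps [H7 [H6 [H3 [H5 [H1 _]]]]]]]. pose proof eps_facts.
  destruct eta1 as [I1 [I1h [Lt [No [Gx Gy]]]]]. set (h := hh) in *.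
  assert (Rv : forall x, inF E M x -> 0 <= x -> rv (sg x) = x) by (intros; rewrite Hp, rv_exact; auto).
  assert (Rn : forall x, inF E M x -> x <= 0 -> x <= rv (sg x) <= 0).
  { intros x Hx Hx0. specialize (Hn x Hx0). split; [apply rv_ge_f|apply rv_le_f]; auto; try lra; apply inF_0. }
  apply (cond1_gen sg 0 1 1 (1 + h) 1); auto.
  - intros x Hx. apply rng_le. pose proof (inF_abs_le x Hx).
    destruct (Rle_dec 0 x); [rewrite Hp; auto|]. specialize (Hn x ltac:(lra)).
    rewrite Rabs_left1 in * by lra. lra.
  - apply inF_0.
  - rewrite Rv; [auto|apply inF_0|lra].
  - rewrite Rv by (auto; lra). rewrite Rabs_R1. lra.
  - rewrite Rabs_R0, Rabs_R1. unfold Rmax. destruct (Rle_dec 0 1); lra.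
  - intros x Hx Hb. unfold Rmin, Rmax in *; destruct (Rle_dec 0 1); [|lra].
    rewrite (Rv x) by (auto; lra). rewrite (Rv 1) by (auto; lra). destruct (Rle_dec 0 1); lra.
  - rewrite Rabs_R1. lra.
  - rewrite Rv by (auto; lra). rewrite Rabs_R1. lra.
  - rewrite Rv by (auto; lra). rewrite Rabs_R1, Rabs_right by lra. lra.
  - intros x Hx Hle. rewrite (Rv 1) by (auto; lra). destruct (Rle_dec 0 x).
    + rewrite Rv; auto.
    + pose proof (Rn x Hx ltac:(lra)). lra.
  - rewrite !Rv by (auto; lra). lra.
  - intros y Hy Hle. rewrite !Rv by (auto; lra). auto.
  - rewrite Rv by (auto; lra). rewrite Rabs_R1. unfold Rmin. destruct (Rle_dec 1 (P (MZ + 3))); lra.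
  - intros x Hx Hle. rewrite (Rv 1) by (auto; lra). destruct (Rle_dec 0 x).
    + rewrite Rv by auto. lra.
    + pose proof (Rn x Hx ltac:(lra)). rewrite Rabs_left1 by lra. rewrite Rabs_left1 by lra. lra.
  - intros y Hy Hle. rewrite !Rv by (auto; lra). lra.
Qed.


Lemma rv_err1 r : Rabs r <= 1 -> Rabs (r - rv r) <= hh / 2.
Proof.
  intros H. pose proof zfacts. pose proof nums as [_ [_ [_ [_ [_ [_ [_ [E1 _]]]]]]]].
  rewrite <- E1. apply rv_err; [lia|]. simpl. replace (2 * / 2) with 1 by field. auto.
Qed.

Lemma rv_err2 r : Rabs r <= 2 -> Rabs (r - rv r) <= hh.
Proof.
  intros H. pose proof zfacts. pose proof nums as [_ [_ [_ [_ [_ [_ [_ [_ [_ [_ [_ E0]]]]]]]]]]].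
  rewrite <- E0. apply rv_err; [lia|]. simpl. lra.
Qed.

Lemma inF_half : inF E M (1/2).
Proof. pose proof zfacts. replace (1/2) with (P (-1)) by (simpl; field). apply inF_P. lia. Qed.

Lemma inF_2 : inF E M 2.
Proof. pose proof zfacts. replace 2 with (P 1) by (simpl; field). apply inF_P. lia. Qed.

Lemma cond_xphi (phi : R -> R) : (forall x, 0 <= phi x <= 1) -> (forall a b, a <= b -> phi a <= phi b) ->
  (forall a b, Rabs (phi a - phi b) <= 4 * Rabs (a - b)) -> 1/2 < phi 1 <= 15/16 ->
  Condition1 E M (rndf E M (fun x => x * phi x)).
Proof.
  intros Hb Hm Hl H1. pose proof nums as [Hh [Heps [H7 [H6 [H3 [H5 [Hem1 [Eh1 _]]]]]]]]. pose proof eps_facts.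
  pose proof zfacts.
  destruct eta1 as [I1 [I1h [Lt [No [Gx Gy]]]]]. set (h := hh) in *.
  pose proof inF_half as Ihalf. pose proof inF_2 as I2. pose proof inF_0 as I0.
  assert (Hs0 : 1/2 <= rv (1 * phi 1) <= 1).
  { split; [apply rv_ge_f|apply rv_le_f]; auto; lra. }
  assert (Hs1 : 1/2 <= rv ((1 + h) * phi (1 + h)) <= 2).
  { pose proof (Hm 1 (1 + h) ltac:(lra)). pose proof (Hb (1 + h)).
    split; [apply rv_ge_f|apply rv_le_f]; auto; nra. }
  assert (Hneg : forall x, inF E M x -> x <= 0 -> x <= rv (x * phi x) <= 0).
  { intros x Hx Hx0. pose proof (Hb x). split; [apply rv_ge_f|apply rv_le_f]; auto; nra. }
  assert (Hmono : forall a b, 0 <= a <= b -> a * phi a <= b * phi b).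
  { intros a b Hab. pose proof (Hm a b ltac:(lra)). pose proof (Hb a). nra. }
  apply (cond1_gen (fun x => x * phi x) 0 1 1 (1 + h) 64); auto.
  - intros x Hx. apply rng_le. pose proof (inF_abs_le x Hx). pose proof (Hb x).
    rewrite Rabs_mult. rewrite (Rabs_right (phi x)) by lra.
    pose proof (Rabs_pos x). nra.
  - rewrite Rmult_0_l, rv_exact; auto.
  - rewrite Rabs_right by lra. lra.
  - rewrite Rabs_R0, Rabs_R1. unfold Rmax. destruct (Rle_dec 0 1); lra.
  - intros x Hx Hbt. unfold Rmin, Rmax in *; destruct (Rle_dec 0 1); [|lra].
    destruct (Rle_dec 0 (rv (1 * phi 1))); [|lra].
    split.
    + rewrite <- (rv_exact 0 I0). apply rv_mono. pose proof (Hb x). nra.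
    + apply rv_mono. apply Hmono. lra.
  - rewrite Rabs_R1. lra.
  - rewrite Rabs_right by lra. rewrite Rabs_R1. lra.
  - rewrite Rabs_right by lra. rewrite Rabs_R1. lra.
  - intros x Hx Hle. destruct (Rle_dec 0 x).
    + apply rv_mono. apply Hmono. lra.
    + pose proof (Hneg x Hx ltac:(lra)). lra.
  - apply (rv_strict _ _ (-1)); [lia| | |].
    + simpl. lra.
    + rewrite Eh1. simpl. lra.
    + rewrite Eh1. pose proof (Hm 1 (1 + h) ltac:(lra)). nra.
  - intros y Hy Hle. apply rv_mono. apply Hmono. lra.
  - split; [lra|]. unfold Rmin. rewrite Rabs_right by lra.
    destruct (Rle_dec (rv (1 * phi 1)) (P (MZ + 3))); nra.
  - intros x Hx Hle. destruct (Rle_dec 0 x).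
    + apply (c3_near x 1 _ _ (x * phi x) (1 * phi 1) (h / 2) (h / 2) 5 64); try lra.
      * intros Hne. destruct (Rle_dec (1/2) x); [apply Gx; auto|]. rewrite Rabs_left by lra. lra.
      * intros ->; auto.
      * apply rv_err1. pose proof (Hb x). rewrite Rabs_right by nra. nra.
      * apply rv_err1. pose proof (Hb 1). rewrite Rabs_right by nra. nra.
      * replace (x * phi x - 1 * phi 1) with ((x - 1) * phi x + (phi x - phi 1)) by ring.
        pose proof (Rabs_triang ((x - 1) * phi x) (phi x - phi 1)) as T.
        rewrite Rabs_mult in T. rewrite (Rabs_right (phi x)) in T by (pose proof (Hb x); lra).
        pose proof (Hl x 1). pose proof (Hb x). pose proof (Rabs_pos (x - 1)). nra.
    + pose proof (Hneg x Hx ltac:(lra)). rewrite (Rabs_left (x - 1)) by lra.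
      rewrite Rabs_left1 by lra. lra.
  - intros y Hy Hle. destruct (Rle_dec y 2).
    + apply (c3_near y (1 + h) _ _ (y * phi y) ((1 + h) * phi (1 + h)) h h 6 64); try lra.
      * intros Hne. apply Gy; auto; lra.
      * intros ->; auto.
      * apply rv_err2. pose proof (Hb y). rewrite Rabs_right by nra. nra.
      * apply rv_err2. pose proof (Hb (1 + h)). rewrite Rabs_right by nra. nra.
      * replace (y * phi y - (1 + h) * phi (1 + h)) with ((y - (1 + h)) * phi y + (1 + h) * (phi y - phi (1 + h))) by ring.
        pose proof (Rabs_triang ((y - (1 + h)) * phi y) ((1 + h) * (phi y - phi (1 + h)))) as T.
        rewrite !Rabs_mult in T. rewrite (Rabs_right (phi y)) in T by (pose proof (Hb y); lra).
        rewrite (Rabs_right (1 + h)) in T by lra.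
        pose proof (Hl y (1 + h)). pose proof (Hb y). pose proof (Rabs_pos (y - (1 + h))).
        pose proof (Rabs_pos (phi y - phi (1 + h))). nra.
    + assert (rv (y * phi y) <= y) by (apply rv_le_f; auto; pose proof (Hb y); nra).
      assert (rv ((1 + h) * phi (1 + h)) <= rv (y * phi y)) by (apply rv_mono, Hmono; lra).
      rewrite Rabs_right by lra. rewrite Rabs_right by lra. lra.
Qed.

Theorem relu_ok : Condition1 E M (rndf E M ReLU).
Proof.
  apply cond_relu.
  - intros x H. unfold ReLU. apply Rmax_left. lra.
  - intros x H. unfold ReLU. rewrite Rmax_right by lra. lra.
Qed.

Theorem leaky_ok a : 0 < a < 1 -> Condition1 E M (rndf E M (LeakyReLU a)).
Proof.
  intros Ha. apply cond_relu.
  - intros x H. unfold LeakyReLU. apply Rmax_left. nra.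
  - intros x H. unfold LeakyReLU. rewrite Rmax_right by nra. nra.
Qed.

Theorem elu_ok : Condition1 E M (rndf E M ELU).
Proof.
  apply cond_relu.
  - intros x H. unfold ELU. destruct (Rlt_dec 0 x); auto.
    assert (x = 0) by lra. subst. rewrite exp_0. ring.
  - intros x H. unfold ELU. destruct (Rlt_dec 0 x); [lra|].
    pose proof (exp_ge x). pose proof (exp_mono x 0 H). rewrite exp_0 in H1. lra.
Qed.

Theorem gelu_ok : Condition1 E M (rndf E M GELU).
Proof.
  apply (cond_xphi Phi).
  - apply Phi_bnd.
  - apply Phi_mono.
  - apply Phi_lip.
  - apply Phi_1.
Qed.

Theorem mish_ok : Condition1 E M (rndf E M Mish).
Proof.
  apply (cond_xphi mphi).
  - apply mphi_bnd.
  - apply mphi_mono.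
  - apply mphi_lip.
  - apply mphi_1.
Qed.


Lemma eta_half : let h := hh in
  inF E M (1/2) /\ inF E M (1/2 + h/2) /\ 1/2 < 1/2 + h/2 /\ (forall w, inF E M w -> 1/2 < w < 1/2 + h/2 -> False) /\
  (forall x, inF E M x -> 1/4 <= x -> x <> 1/2 -> h / 4 <= Rabs (x - 1/2)) /\
  (forall x, inF E M x -> 1/2 <= x -> x <> 1/2 + h/2 -> h / 2 <= Rabs (x - (1/2 + h/2))).
Proof.
  intros h. pose proof zfacts. pose proof pow2M1. pose proof nums as [_ [_ [_ [_ [_ [_ [_ [Eh1 [Eh2 _]]]]]]]]].
  assert (0 < 2 ^ MZ)%Z by (apply Z.pow_pos_nonneg; lia).
  assert (E1 : IZR (2 ^ MZ) * P (-1 - MZ) = 1/2) by (rewrite P_as_int; simpl; field).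
  assert (E2 : IZR (2 ^ MZ + 1) * P (-1 - MZ) = 1/2 + h/2).
  { rewrite plus_IZR, Rmult_plus_distr_r, E1, Eh1. unfold h. ring. }
  destruct (succ_gen (2 ^ MZ) (-1)) as [A1 [A2 [A3 A4]]]; try lia.
  rewrite E1, E2 in *. split; auto. split; auto. split; auto. split; auto. split.
  - intros x Hx Hx1 Hx2.
    assert (E3 : IZR (2 ^ (MZ + 1)) * P (-2 - MZ) = 1/2).
    { rewrite P_IZR by lia. rewrite <- P_add. replace (MZ + 1 + (-2 - MZ))%Z with (-1)%Z by lia. simpl. field. }
    assert (Hp : P (-2) <= Rabs x) by (replace (P (-2)) with (1/4) by (simpl; field); rewrite Rabs_right; lra).
    pose proof (gap x (2 ^ (MZ + 1)) (-2) Hx Hp) as G. rewrite E3, Eh2 in G. apply G; auto.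
  - intros y Hy Hy1 Hy2. rewrite <- E2. replace (h / 2) with (P (-1 - MZ)) by (unfold h; lra).
    apply gap; auto. rewrite Rabs_right by lra. simpl; lra. rewrite E2; auto.
Qed.

Lemma rv_err5 r : Rabs r <= 1/16 -> Rabs (r - rv r) <= hh / 32.
Proof.
  intros H. pose proof zfacts. pose proof nums as [_ [_ [_ [_ [_ [_ [_ [_ [_ [_ [E5 _]]]]]]]]]]].
  rewrite <- E5. apply rv_err; [lia|]. simpl. lra.
Qed.

Theorem tanh_ok : Condition1 E M (rndf E M tanh_act).
Proof.
  pose proof nums as [Hh [Heps [H7 [H6 [H3 [H5 [Hem1 [Eh1 [Eh2 _]]]]]]]]]. pose proof eps_facts.
  pose proof zfacts. unfold tanh_act.
  destruct eta_half as [I1 [I1h [Lt [No [Gx Gy]]]]]. set (h := hh) in *.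
  pose proof inF_half as Ihalf. pose proof inF_1 as I1'. pose proof inF_0 as I0.
  assert (Iq : inF E M (1/4)) by (replace (1/4) with (P (-2)) by (simpl; field); apply inF_P; lia).
  pose proof tanh_1. pose proof tanh_half. pose proof (tanh_bnd 1).
  assert (Hv : 1/2 <= rv (Rtrigo_def.tanh 1) <= 1) by (split; [apply rv_ge_f|apply rv_le_f]; auto; lra).
  assert (Hs0 : 1/4 <= rv (Rtrigo_def.tanh (1/2)) <= 1/2) by (split; [apply rv_ge_f|apply rv_le_f]; auto; lra).
  assert (Hs1 : 1/4 <= rv (Rtrigo_def.tanh (1/2 + h/2)) <= 1).
  { pose proof (tanh_mono (1/2) (1/2 + h/2) ltac:(lra)). pose proof (tanh_bnd (1/2 + h/2)).
    split; [apply rv_ge_f|apply rv_le_f]; auto; lra. }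
  apply (cond1_gen Rtrigo_def.tanh 0 1 (1/2) (1/2 + h/2) 16); auto.
  - intros x Hx. apply rng_le. pose proof (tanh_bnd x). pose proof (inF_abs_le 1 I1') as Ho.
    rewrite Rabs_R1 in Ho. apply Rabs_le; lra.
  - rewrite tanh_0, rv_exact; auto.
  - rewrite Rabs_right by lra. lra.
  - rewrite Rabs_R0, Rabs_R1. unfold Rmax. destruct (Rle_dec 0 1); lra.
  - intros x Hx Hbt. unfold Rmin, Rmax in *; destruct (Rle_dec 0 1); [|lra].
    destruct (Rle_dec 0 (rv (Rtrigo_def.tanh 1))); [|lra].
    split.
    + rewrite <- (rv_exact 0 I0). apply rv_mono. rewrite <- tanh_0. apply tanh_mono. lra.
    + apply rv_mono. apply tanh_mono. lra.
  - rewrite Rabs_right by lra. lra.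
  - rewrite Rabs_right by lra. rewrite (Rabs_right (1/2)) by lra. lra.
  - rewrite Rabs_right by lra. rewrite (Rabs_right (1/2)) by lra. lra.
  - intros x Hx Hle. apply rv_mono, tanh_mono. lra.
  - apply (rv_strict _ _ (-2)); [lia| | |].
    + simpl. lra.
    + rewrite Eh2. simpl. lra.
    + rewrite Eh2. pose proof (tanh_incr_half (h/2) ltac:(lra)). lra.
  - intros y Hy Hle. apply rv_mono, tanh_mono. lra.
  - split; [lra|]. unfold Rmin. rewrite Rabs_right by lra.
    destruct (Rle_dec (rv (Rtrigo_def.tanh (1/2))) (P (MZ + 3))); nra.
  - intros x Hx Hle.
    apply (c3_near x (1/2) _ _ (Rtrigo_def.tanh x) (Rtrigo_def.tanh (1/2)) (h / 2) (h / 4) 4 16); try lra.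
    + intros Hne. destruct (Rle_dec (1/4) x); [apply Gx; auto|]. rewrite Rabs_left by lra. lra.
    + intros ->; auto.
    + apply rv_err1. pose proof (tanh_bnd x). apply Rabs_le; lra.
    + apply rv_err1. apply Rabs_le; lra.
    + apply tanh_lip.
  - intros y Hy Hle.
    apply (c3_near y (1/2 + h/2) _ _ (Rtrigo_def.tanh y) (Rtrigo_def.tanh (1/2 + h/2)) (h / 2) (h / 2) 4 16); try lra.
    + intros Hne. apply Gy; auto; lra.
    + intros ->; auto.
    + apply rv_err1. pose proof (tanh_bnd y). apply Rabs_le; lra.
    + apply rv_err1. pose proof (tanh_bnd (1/2 + h/2)). apply Rabs_le; lra.
    + apply tanh_lip.
Qed.


Lemma eta_m3 : let h := hh in
  inF E M (-3) /\ inF E M (-3 + 2 * h) /\ -3 < -3 + 2 * h /\ (forall w, inF E M w -> -3 < w < -3 + 2 * h -> False) /\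
  (forall x, inF E M x -> x <= -3 -> x <> -3 -> 2 * h <= Rabs (x - -3)) /\
  (forall y, inF E M y -> -3 + 2 * h <= y -> y <> -3 + 2 * h -> 2 * h <= Rabs (y - (-3 + 2 * h))).
Proof.
  intros h. pose proof zfacts. pose proof pow2M1. pose proof nums as [Hh [_ [_ [_ [_ [_ [_ [_ [_ [E1 _]]]]]]]]]].
  destruct inF_m3 as [Im3 Em3].
  assert (Hm : (2 ^ MZ = 2 * 2 ^ (MZ - 1))%Z).
  { replace MZ with ((MZ - 1) + 1)%Z at 1 by lia. rewrite Z.pow_add_r by lia. lia. }
  assert (0 < 2 ^ (MZ - 1))%Z by (apply Z.pow_pos_nonneg; lia).
  set (j0 := (- (3 * 2 ^ (MZ - 1)))%Z) in *.
  assert (E2 : IZR (j0 + 1) * P (1 - MZ) = -3 + 2 * h).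
  { rewrite plus_IZR, Rmult_plus_distr_r, <- Em3, E1. unfold h. ring. }
  destruct (succ_gen j0 1) as [A1 [A2 [A3 A4]]]; try (unfold j0; lia).
  rewrite <- Em3, E2 in *. split; auto. split; auto. split; auto. split; auto. split.
  - intros x Hx Hx1 Hx2.
    assert (Hp : P 1 <= Rabs x) by (simpl; rewrite Rabs_left by lra; lra).
    pose proof (gap x j0 1 Hx Hp) as G. rewrite <- Em3, E1 in G. apply G; auto.
  - intros y Hy Hy1 Hy2. destruct (Rle_dec y (-2)).
    + assert (Hp : P 1 <= Rabs y) by (simpl; rewrite Rabs_left by lra; lra).
      pose proof (gap y (j0 + 1) 1 Hy Hp) as G. rewrite E2, E1 in G. apply G; auto.
    + unfold h in *. rewrite Rabs_right by lra. lra.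
Qed.

Lemma exp_tiny : exp (- P eM) < P (em - MZ) / 2.
Proof.
  pose proof zfacts.
  assert (Hz : (eM + MZ + 1 <= 2 ^ eM)%Z).
  { assert (eM - 2 < 2 ^ (eM - 2))%Z by (apply Z.pow_gt_lin_r; lia).
    replace eM with ((eM - 2) + 2)%Z at 2 by lia. rewrite Z.pow_add_r by lia. simpl (2 ^ 2)%Z. lia. }
  set (N := Z.to_nat (eM + MZ + 1)).
  assert (HN : INR N <= P eM).
  { rewrite INR_IZR_INZ. unfold N. rewrite Z2Nat.id by lia. rewrite <- P_IZR by lia. apply IZR_le. auto. }
  assert (H1 : exp (- P eM) <= exp (- INR N)) by (apply exp_mono; lra).
  assert (H2 : exp (INR N) = exp 1 ^ N) by (rewrite <- exp_nat; f_equal; ring).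
  assert (H3 : 2 ^ N <= exp 1 ^ N) by (apply pow_incr; pose proof e_lb; lra).
  assert (H4 : 2 ^ N = 2 * P (eM + MZ)).
  { rewrite pow_powerRZ. unfold N. rewrite Z2Nat.id by lia. rewrite P_add. simpl. lra. }
  assert (H5 : P (em - MZ) / 2 = / P (eM + MZ)).
  { replace (em - MZ)%Z with (- (eM + MZ) + 1)%Z by lia. rewrite P_S, P_opp. field. apply Rgt_not_eq, P_pos. }
  rewrite H5. rewrite (exp_Ropp (INR N)) in H1. rewrite H2 in H1.
  pose proof (P_pos (eM + MZ)).
  assert (/ exp 1 ^ N <= / (2 * P (eM + MZ))) by (apply Rinv_le_contravar; lra).
  assert (/ (2 * P (eM + MZ)) < / P (eM + MZ)) by (apply Rinv_lt_contravar; nra).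
  lra.
Qed.

Lemma inF_mPeM : inF E M (- P eM).
Proof. apply inF_opp. apply inF_P. pose proof zfacts. lia. Qed.

Lemma PeM_big : 16 <= P eM.
Proof. pose proof zfacts. replace 16 with (P 4) by (simpl; ring). apply P_mono. lia. Qed.

Theorem sigmoid_ok : Condition1 E M (rndf E M sigmoid).
Proof.
  pose proof nums as [Hh [Heps [H7 [H6 [H3 [H5 [Hem1 [Eh1 [Eh2 [Eh3 [Eh5 _]]]]]]]]]]]. pose proof eps_facts.
  pose proof zfacts.
  destruct eta_m3 as [I1 [I1h [Lt [No [Gx Gy]]]]]. set (h := hh) in *.
  pose proof inF_half as Ihalf. pose proof inF_1 as I1'. pose proof inF_0 as I0.
  assert (I32 : inF E M (1/32)) by (replace (1/32) with (P (-5)) by (simpl; field); apply inF_P; lia).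
  assert (I16 : inF E M (1/16)) by (replace (1/16) with (P (-4)) by (simpl; field); apply inF_P; lia).
  pose proof sgm_m3. pose proof inF_mPeM as Ic1. pose proof PeM_big.
  assert (Hc1 : rv (sigmoid (- P eM)) = 0).
  { apply rv_zero. pose proof (sgm_tiny (P eM) ltac:(lra)). pose proof exp_tiny. pose proof (sgm_pos (- P eM)). lra. }
  assert (Hs0 : 1/32 <= rv (sigmoid (-3)) <= 1/16) by (split; [apply rv_ge_f|apply rv_le_f]; auto; lra).
  assert (Hs1 : 1/32 <= rv (sigmoid (-3 + 2 * h)) <= 1).
  { pose proof (sgm_mono (-3) (-3 + 2 * h) ltac:(lra)). pose proof (sgm_lt1 (-3 + 2 * h)).
    split; [apply rv_ge_f|apply rv_le_f]; auto; lra. }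
  assert (Hv : rv (sigmoid 0) = 1/2) by (rewrite sgm_0; apply rv_exact; auto).
  apply (cond1_gen sigmoid (- P eM) 0 (-3) (-3 + 2 * h) 4); auto.
  - intros x Hx. apply rng_le. pose proof (sgm_pos x). pose proof (sgm_lt1 x). pose proof (inF_abs_le 1 I1') as Ho.
    rewrite Rabs_R1 in Ho. apply Rabs_le; lra.
  - rewrite Hv. rewrite Rabs_right by lra. lra.
  - rewrite Rabs_R0, Rabs_Ropp, Rabs_right by lra. unfold Rmax. destruct (Rle_dec (P eM) 0); [lra|].
    apply Rle_ge. apply P_mono. lia.
  - intros x Hx Hbt. rewrite Hv. unfold Rmin, Rmax in *. destruct (Rle_dec (- P eM) 0); [|lra].
    destruct (Rle_dec 0 (1/2)); [|lra].
    split.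
    + rewrite <- Hc1. apply rv_mono, sgm_mono. lra.
    + rewrite <- Hv. apply rv_mono, sgm_mono. lra.
  - replace (Rabs (-3)) with 3 by (rewrite Rabs_left by lra; lra). lra.
  - rewrite Rabs_right by lra. replace (Rabs (-3)) with 3 by (rewrite Rabs_left by lra; lra). lra.
  - rewrite Rabs_right by lra. replace (Rabs (-3)) with 3 by (rewrite Rabs_left by lra; lra). lra.
  - intros x Hx Hle. apply rv_mono, sgm_mono. lra.
  - apply (rv_strict _ _ (-5)); [lia| | |].
    + simpl. lra.
    + rewrite Eh5. simpl. lra.
    + rewrite Eh5. pose proof (sgm_incr_m3 (2 * h) ltac:(lra)). lra.
  - intros y Hy Hle. apply rv_mono, sgm_mono. lra.
  - split; [lra|]. unfold Rmin. rewrite Rabs_right by lra.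
    destruct (Rle_dec (rv (sigmoid (-3))) (P (MZ + 3))); nra.
  - intros x Hx Hle.
    apply (c3_near x (-3) _ _ (sigmoid x) (sigmoid (-3)) (h / 32) (2 * h) 1 4); try lra.
    + intros Hne. apply Gx; auto.
    + intros ->; auto.
    + apply rv_err5. pose proof (sgm_mono x (-3) Hle). pose proof (sgm_pos x). apply Rabs_le; lra.
    + apply rv_err5. apply Rabs_le; lra.
    + rewrite Rmult_1_l. apply sgm_lip.
  - intros y Hy Hle.
    apply (c3_near y (-3 + 2 * h) _ _ (sigmoid y) (sigmoid (-3 + 2 * h)) (h / 2) (2 * h) 1 4); try lra.
    + intros Hne. apply Gy; auto.
    + intros ->; auto.
    + apply rv_err1. pose proof (sgm_pos y). pose proof (sgm_lt1 y). apply Rabs_le; lra.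
    + apply rv_err1. pose proof (sgm_pos (-3 + 2 * h)). pose proof (sgm_lt1 (-3 + 2 * h)). apply Rabs_le; lra.
    + rewrite Rmult_1_l. apply sgm_lip.
Qed.


Lemma Omega_ge : P eM <= Omega E M.
Proof.
  unfold Omega. pose proof (P_pos eM). pose proof nums as [Hh _]. unfold hh in Hh.
  replace (- Z.of_nat M)%Z with (- MZ)%Z by reflexivity. nra.
Qed.

Lemma sp_range x : inF E M x -> - Omega E M - cc < softplus x < Omega E M + cc.
Proof.
  intros Hx. pose proof (sp_pos x). pose proof cc_pos. pose proof Omega_ge. pose proof PeM_big.
  pose proof (inF_abs_le x Hx). apply Rabs_le_between in H3.
  split; [lra|].
  destruct (Rle_dec x 0).
  - pose proof (sp_mono x 0 r). pose proof sp_0. lra.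
  - pose proof (sp_le_x x). destruct (Rle_dec x (Omega E M - 1)).
    + assert (exp (- x) <= 1) by (rewrite <- exp_0; apply exp_mono; lra). lra.
    + assert (exp (- x) < cc).
      { pose proof (exp_ge x). rewrite exp_Ropp.
        assert (/ exp x <= / P eM) by (apply Rinv_le_contravar; lra).
        rewrite <- P_opp in H6. rewrite cc_eq. pose proof zfacts.
        assert (P (- eM) < P (eM - MZ - 1)) by (apply P_lt; lia). lra. }
      lra.
Qed.

Theorem softplus_ok : Condition1 E M (rndf E M softplus).
Proof.
  pose proof nums as [Hh [Heps [H7 [H6 [H3 [H5 [Hem1 [Eh1 [Eh2 [Eh3 [Eh5 _]]]]]]]]]]]. pose proof eps_facts.
  pose proof zfacts.
  destruct eta_m3 as [I1 [I1h [Lt [No [Gx Gy]]]]]. set (h := hh) in *.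
  pose proof inF_half as Ihalf. pose proof inF_1 as I1'. pose proof inF_0 as I0. pose proof inF_2 as I2.
  assert (I32 : inF E M (1/32)) by (replace (1/32) with (P (-5)) by (simpl; field); apply inF_P; lia).
  assert (I16 : inF E M (1/16)) by (replace (1/16) with (P (-4)) by (simpl; field); apply inF_P; lia).
  pose proof sp_m3. pose proof inF_mPeM as Ic1. pose proof PeM_big. pose proof sp_0.
  assert (Hc1 : rv (softplus (- P eM)) = 0).
  { apply rv_zero. pose proof (sp_le_exp (- P eM)). pose proof exp_tiny. pose proof (sp_pos (- P eM)). lra. }
  assert (Hs0 : 1/32 <= rv (softplus (-3)) <= 1/16) by (split; [apply rv_ge_f|apply rv_le_f]; auto; lra).
  assert (Hs1 : 1/32 <= rv (softplus (-3 + 2 * h)) <= 1).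
  { pose proof (sp_mono (-3) (-3 + 2 * h) ltac:(lra)). pose proof (sp_mono (-3 + 2 * h) 0 ltac:(lra)).
    split; [apply rv_ge_f|apply rv_le_f]; auto; lra. }
  assert (Hv : 1/2 <= rv (softplus 0) <= 1) by (split; [apply rv_ge_f|apply rv_le_f]; auto; lra).
  apply (cond1_gen softplus (- P eM) 0 (-3) (-3 + 2 * h) 4); auto.
  - apply sp_range.
  - rewrite Rabs_right by lra. lra.
  - rewrite Rabs_R0, Rabs_Ropp, Rabs_right by lra. unfold Rmax. destruct (Rle_dec (P eM) 0); [lra|].
    apply Rle_ge. apply P_mono. lia.
  - intros x Hx Hbt. unfold Rmin, Rmax in *. destruct (Rle_dec (- P eM) 0); [|lra].
    destruct (Rle_dec 0 (rv (softplus 0))); [|lra].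
    split.
    + rewrite <- Hc1. apply rv_mono, sp_mono. lra.
    + apply rv_mono, sp_mono. lra.
  - replace (Rabs (-3)) with 3 by (rewrite Rabs_left by lra; lra). lra.
  - rewrite Rabs_right by lra. replace (Rabs (-3)) with 3 by (rewrite Rabs_left by lra; lra). lra.
  - rewrite Rabs_right by lra. replace (Rabs (-3)) with 3 by (rewrite Rabs_left by lra; lra). lra.
  - intros x Hx Hle. apply rv_mono, sp_mono. lra.
  - apply (rv_strict _ _ (-5)); [lia| | |].
    + simpl. lra.
    + rewrite Eh5. simpl. lra.
    + rewrite Eh5. pose proof (sp_incr (2 * h) ltac:(lra)). lra.
  - intros y Hy Hle. apply rv_mono, sp_mono. lra.
  - split; [lra|]. unfold Rmin. rewrite Rabs_right by lra.
    destruct (Rle_dec (rv (softplus (-3))) (P (MZ + 3))); nra.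
  - intros x Hx Hle.
    apply (c3_near x (-3) _ _ (softplus x) (softplus (-3)) (h / 32) (2 * h) 1 4); try lra.
    + intros Hne. apply Gx; auto.
    + intros ->; auto.
    + apply rv_err5. pose proof (sp_mono x (-3) Hle). pose proof (sp_pos x). apply Rabs_le; lra.
    + apply rv_err5. apply Rabs_le; lra.
    + rewrite Rmult_1_l. apply sp_lip.
  - intros y Hy Hle. destruct (Rle_dec y 1).
    + apply (c3_near y (-3 + 2 * h) _ _ (softplus y) (softplus (-3 + 2 * h)) h (2 * h) 1 4); try lra.
      * intros Hne. apply Gy; auto.
      * intros ->; auto.
      * apply rv_err2. pose proof (sp_pos y). pose proof (sp_mono y 1 r). pose proof sp_1. apply Rabs_le; lra.
      * apply rv_err2. pose proof (sp_pos (-3 + 2 * h)). pose proof (sp_mono (-3 + 2 * h) 0 ltac:(lra)). apply Rabs_le; lra.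
      * rewrite Rmult_1_l. apply sp_lip.
    + pose proof (rv_near (softplus y) y Hy) as Hn.
      pose proof (sp_le_x y). pose proof (sp_ge_x y).
      assert (exp (- y) <= 1) by (rewrite <- exp_0; apply exp_mono; lra).
      rewrite (Rabs_right (softplus y - y)) in Hn by lra.
      pose proof (Rle_abs (rv (softplus y) - softplus y)) as Ha. rewrite Rabs_minus_sym in Ha.
      assert (rv (softplus (-3 + 2 * h)) <= rv (softplus y)) by (apply rv_mono, sp_mono; lra).
      rewrite Rabs_right by lra. rewrite Rabs_right by lra. lra.
Qed.

End Flt.

Theorem corollary1 (E M : nat) (hE : (5 <= E)%nat) (hM : (3 <= M)%nat)
  (hME : (M <= 2 ^ (E - 1))%nat) :
  Condition1 E M (rndf E M ReLU) /\
  (forall a : R, 0 < a < 1 -> Condition1 E M (rndf E M (LeakyReLU a))) /\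
  Condition1 E M (rndf E M GELU) /\
  Condition1 E M (rndf E M ELU) /\
  Condition1 E M (rndf E M Mish) /\
  Condition1 E M (rndf E M softplus) /\
  Condition1 E M (rndf E M sigmoid) /\
  Condition1 E M (rndf E M tanh_act).
Proof.
  split; [eapply relu_ok; eauto|].
  split; [intros a Ha; eapply leaky_ok; eauto|].
  split; [eapply gelu_ok; eauto|].
  split; [eapply elu_ok; eauto|].
  split; [eapply mish_ok; eauto|].
  split; [eapply softplus_ok; eauto|].
  split; [eapply sigmoid_ok; eauto|].
  eapply tanh_ok; eauto.
Qed.
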